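(* If $m=2$ and $k=3$, then the kernel of the Spencer operator $\mathcal S^2\colon\operatorname{Hom}(\wedge^2V,\mathfrak a)\to\operatorname{Hom}(\wedge^3V,V)$ is one-dimensional.
   Context: $\mathfrak a=\mathfrak{sl}(2,\mathbb R)\times\mathfrak{gl}(m,\mathbb R)$ acting faithfully on $V=V_k\otimes W$, where $V_k=S^k(\mathbb R^2)$ is the irreducible $(k+1)$-dimensional $\mathfrak{sl}(2,\mathbb R)$-module and $W=\mathbb R^m$ the standard $\mathfrak{gl}(m,\mathbb R)$-module. $\mathcal S^2(\phi)(v_1\wedge v_2\wedge v_3)=-\phi(v_2\wedge v_3)v_1+\phi(v_1\wedge v_3)v_2-\phi(v_1\wedge v_2)v_3$. *)

(* Defs.v *)
From mathcomp Require Import all_boot all_order all_algebra.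
From mathcomp Require Import reals mxtens.
Set Implicit Arguments. Unset Strict Implicit. Unset Printing Implicit Defensive.
Import Order.TTheory GRing.Theory Num.Theory.
Local Open Scope ring_scope.

(* Action of X in gl(2,R) on V_k = S^k(R^2), the homogeneous polynomials of
   degree k in x = e1, y = e2, in the basis b_i = x^(k-i) y^i (i = 0..k),
   X acting as a derivation.  Matrices act on column coordinate vectors:
   column i is the coordinate vector of X . b_i.  Here X e1 = X00 e1 + X10 e2,
   X e2 = X01 e1 + X11 e2. *)
Definition symrep (R : pzRingType) (k : nat) (X : 'M[R]_2) : 'M[R]_k.+1 :=
  \matrix_(j < k.+1, i < k.+1)
    (if (j : nat) == i then (k - i)%:R * X ord0 ord0 + (i : nat)%:R * X ord_max ord_max
     else if (j : nat) == i.+1 then (k - i)%:R * X ord_max ord0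
     else if (j : nat).+1 == i then (i : nat)%:R * X ord0 ord_max
     else 0).

(* Elements of a = sl(2,R) x gl(m,R), stored as pairs (X, Y) with \tr X = 0. *)
Definition aelt (R : pzRingType) (m : nat) := ('M[R]_2 * 'M[R]_m)%type.
Definition in_a (R : pzRingType) (m : nat) (x : aelt R m) : Prop := \tr x.1 = 0.

Definition Vdim (k m : nat) : nat := (k.+1 * m)%N.

Definition rhoV (R : comPzRingType) (k m : nat) (x : aelt R m) : 'M[R]_(Vdim k m) :=
  @tensmx R _ _ _ _ (symrep k x.1) (1%:M : 'M[R]_m)
  + @tensmx R _ _ _ _ (1%:M : 'M[R]_k.+1) x.2.

Definition is_Hom2 (R : comPzRingType) (k m : nat)
    (phi : 'cV[R]_(Vdim k m) -> 'cV[R]_(Vdim k m) -> aelt R m) : Prop :=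
  [/\ (forall u v, in_a (phi u v)),
      (forall (c : R) u u' v, phi (c *: u + u') v = c *: phi u v + phi u' v),
      (forall (c : R) u v v', phi u (c *: v + v') = c *: phi u v + phi u v')
    & (forall u, phi u u = 0)].

Definition spencer2 (R : comPzRingType) (k m : nat)
    (phi : 'cV[R]_(Vdim k m) -> 'cV[R]_(Vdim k m) -> aelt R m)
    (v1 v2 v3 : 'cV[R]_(Vdim k m)) : 'cV[R]_(Vdim k m) :=
  - (rhoV k (phi v2 v3) *m v1) + rhoV k (phi v1 v3) *m v2 - rhoV k (phi v1 v2) *m v3.

Definition in_ker_spencer2 (R : comPzRingType) (k m : nat)
    (phi : 'cV[R]_(Vdim k m) -> 'cV[R]_(Vdim k m) -> aelt R m) : Prop :=
  is_Hom2 phi /\ forall v1 v2 v3, spencer2 phi v1 v2 v3 = 0.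

Definition one_dimensional (R : pzRingType) (A B : Type) (M : lmodType R)
    (K : (A -> B -> M) -> Prop) : Prop :=
  exists phi0, [/\ K phi0, (exists u v, phi0 u v <> 0)
    & forall phi, K phi -> exists c : R, forall u v, phi u v = c *: phi0 u v].

(* Main.v *)
Require Import Defs.
From mathcomp Require Import all_boot all_order all_algebra.
From mathcomp Require Import reals mxtens ring lra.
Set Implicit Arguments. Unset Strict Implicit. Unset Printing Implicit Defensive.
Import Order.TTheory GRing.Theory Num.Theory.
Local Open Scope ring_scope.

Definition cf (i : nat) : nat := match i with 0 => 3 | 1 => 2 | 2 => 1 | _ => 0 end.

Definition yidx (a b : bool) : nat :=
  match a, b with false, false => 4 | false, true => 5 | true, false => 6 | true, true => 7 end.

Definition rho8F (R : pzRingType) (f : nat -> R) (r c : nat) : R :=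
  (if r./2 == c./2 then (cf c./2)%:R * f 0%N + (c./2)%:R * f 3%N
   else if r./2 == (c./2).+1 then (cf c./2)%:R * f 2%N
   else if (r./2).+1 == c./2 then (c./2)%:R * f 1%N else 0) * (odd r == odd c)%:R
  + (r./2 == c./2)%:R * f (yidx (odd r) (odd c)).

Definition ent (R : pzRingType) (x : aelt R 2) (t : nat) : R :=
  match t with
  | 0 => x.1 ord0 ord0 | 1 => x.1 ord0 ord_max | 2 => x.1 ord_max ord0
  | 3 => x.1 ord_max ord_max
  | 4 => x.2 ord0 ord0 | 5 => x.2 ord0 ord_max | 6 => x.2 ord_max ord0
  | 7 => x.2 ord_max ord_max | _ => 0 end.
Arguments ent : simpl never.

Lemma ord2E (i : 'I_2) : i = if odd i then ord_max else ord0.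
Proof. by case: i => [[|[|]]] //= ?; apply: val_inj. Qed.

Lemma rhoV_ent (R : comPzRingType) (x : aelt R 2) (r c : 'I_(Vdim 3 2)) :
  rhoV 3 x r c = rho8F (ent x) r c.
Proof.
rewrite /rhoV !mxE /=.
have h2 : forall k : 'I_(Vdim 3 2), Ordinal (mxtens_index_proof2 k) = if odd k then ord_max else ord0.
  by move=> k; rewrite [LHS]ord2E /= modn2 oddb.
have hc : (3 - c./2 = cf c./2)%N.
  by case: c => [[|[|[|[|[|[|[|[|[|]]]]]]]]]] //.
rewrite !h2 -!val_eqE /= !divn2 hc /rho8F.
by case: (odd r); case: (odd c); rewrite /= ?mxE /ent /=.
Qed.

Definition eN (R : pzRingType) (i : nat) : 'cV[R]_(Vdim 3 2) := delta_mx (inord i) 0.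

Lemma mul_eN (R : pzRingType) (A : 'M[R]_(Vdim 3 2)) r c :
  (A *m eN R c) r 0 = A r (inord c).
Proof. by rewrite /eN -colE mxE. Qed.

Lemma sum_eN (R : pzRingType) (A : 'M[R]_(Vdim 3 2)) r c :
  \sum_j A r j * eN R c j 0 = A r (inord c).
Proof. by rewrite -mul_eN mxE. Qed.

Lemma sp_entry (R : comPzRingType) (phi : 'cV[R]_(Vdim 3 2) -> 'cV[R]_(Vdim 3 2) -> aelt R 2) :
  (forall v1 v2 v3, spencer2 phi v1 v2 v3 = 0) ->
  forall a b c r, (a < 8)%N -> (b < 8)%N -> (c < 8)%N -> (r < 8)%N ->
  - rho8F (ent (phi (eN R b) (eN R c))) r a + rho8F (ent (phi (eN R a) (eN R c))) r b
  - rho8F (ent (phi (eN R a) (eN R b))) r c = 0.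
Proof.
move=> H a b c r ha hb hc hr.
have := congr1 (fun M : 'cV[R]_(Vdim 3 2) => M (inord r) 0) (H (eN R a) (eN R b) (eN R c)).
rewrite /spencer2 !mxE !sum_eN !rhoV_ent !inordK //.
Qed.

Lemma trace_ent (R : pzRingType) (x : aelt R 2) : \tr x.1 = ent x 0 + ent x 3.
Proof.
rewrite /mxtrace !big_ord_recr big_ord0 /= add0r.
by have -> : widen_ord (leqnSn 1) ord_max = ord0 :> 'I_2 by apply: val_inj.
Qed.

Lemma ent_inj (R : pzRingType) (x y : aelt R 2) :
  (forall t, (t < 8)%N -> ent x t = ent y t) -> x = y.
Proof.
case: x y => [X Y] [X' Y'] H.
have e1 : X = X'.
  apply/matrixP => i j; rewrite (ord2E i) (ord2E j).
  by case: (odd i); case: (odd j); [apply: (H 3%N) | apply: (H 2%N) | apply: (H 1%N) | apply: (H 0%N)].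
have e2 : Y = Y'.
  apply/matrixP => i j; rewrite (ord2E i) (ord2E j).
  by case: (odd i); case: (odd j); [apply: (H 7%N) | apply: (H 6%N) | apply: (H 5%N) | apply: (H 4%N)].
by rewrite e1 e2.
Qed.

Lemma entD (R : pzRingType) (x y : aelt R 2) t : ent (x + y) t = ent x t + ent y t.
Proof. by case: t => [|[|[|[|[|[|[|[|t]]]]]]]]; rewrite /ent /= ?mxE ?addr0. Qed.

Lemma ent0 (R : pzRingType) t : ent (0 : aelt R 2) t = 0.
Proof. by case: t => [|[|[|[|[|[|[|[|t]]]]]]]]; rewrite /ent /= ?mxE. Qed.

Lemma entZ (R : pzRingType) (a : R) (x : aelt R 2) t : ent (a *: x) t = a * ent x t.
Proof. by case: t => [|[|[|[|[|[|[|[|t]]]]]]]]; rewrite /ent /= ?mxE ?mulr0. Qed.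

Lemma ent_sum (R : pzRingType) (I : Type) (s : seq I) (F : I -> aelt R 2) t :
  ent (\sum_(i <- s) F i) t = \sum_(i <- s) ent (F i) t.
Proof.
elim: s => [|i s IH]; first by rewrite !big_nil ent0.
by rewrite !big_cons entD IH.
Qed.

Lemma rho8F_ext (R : pzRingType) (f g : nat -> R) r c :
  (forall t, (t < 8)%N -> f t = g t) -> rho8F f r c = rho8F g r c.
Proof.
move=> H; rewrite /rho8F !H //.
by case: (odd r); case: (odd c).
Qed.

Lemma rho8F_add (R : comPzRingType) (f g : nat -> R) r c :
  rho8F (fun t => f t + g t) r c = rho8F f r c + rho8F g r c.
Proof.
rewrite /rho8F; case: ifP => _; last case: ifP => _; last case: ifP => _; ring.
Qed.

Lemma rho8F_scale (R : comPzRingType) (a : R) (f : nat -> R) r c :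
  rho8F (fun t => a * f t) r c = a * rho8F f r c.
Proof.
rewrite /rho8F; case: ifP => _; last case: ifP => _; last case: ifP => _; ring.
Qed.

Lemma rho8F_0 (R : comPzRingType) r c : rho8F (fun _ => 0 : R) r c = 0.
Proof.
rewrite /rho8F; case: ifP => _; last case: ifP => _; last case: ifP => _; ring.
Qed.

Lemma rho8F_sum (R : comPzRingType) (I : Type) (s : seq I) (F : I -> nat -> R) r c :
  rho8F (fun t => \sum_(i <- s) F i t) r c = \sum_(i <- s) rho8F (F i) r c.
Proof.
elim: s => [|i s IH].
  transitivity (rho8F (fun _ => 0 : R) r c).
    by apply: rho8F_ext => t _; rewrite big_nil.
  by rewrite rho8F_0 big_nil.
rewrite big_cons -IH -rho8F_add; apply: rho8F_ext => t _; by rewrite big_cons.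
Qed.

Lemma rho8F_intr (R : comPzRingType) (g : nat -> int) r c :
  rho8F (fun t => (g t)%:~R) r c = (rho8F g r c)%:~R :> R.
Proof.
rewrite /rho8F intrD !intrM !rmorph_nat.
by case: ifP => _; last case: ifP => _; last case: ifP => _;
  rewrite ?intrD ?intrM ?rmorph_nat ?mulr0z.
Qed.
Definition cU (i j t : nat) : int :=
  match i, j, t with
  | 0, 5, 1 => 6
  | 0, 6, 5 => 18
  | 0, 7, 0 => (-9)
  | 0, 7, 3 => 9
  | 0, 7, 4 => (-9)
  | 0, 7, 7 => 9
  | 1, 4, 1 => (-6)
  | 1, 6, 0 => 9
  | 1, 6, 3 => (-9)
  | 1, 6, 4 => (-9)
  | 1, 6, 7 => 9
  | 1, 7, 6 => (-18)
  | 2, 3, 1 => (-4)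
  | 2, 4, 5 => (-6)
  | 2, 5, 0 => 1
  | 2, 5, 3 => (-1)
  | 2, 5, 4 => 3
  | 2, 5, 7 => (-3)
  | 2, 7, 2 => (-6)
  | 3, 4, 0 => (-1)
  | 3, 4, 3 => 1
  | 3, 4, 4 => 3
  | 3, 4, 7 => (-3)
  | 3, 5, 6 => 6
  | 3, 6, 2 => 6
  | 4, 5, 2 => 4
  | _, _, _ => 0 end.

Definition cI (i j t : nat) : int :=
  if (i < j)%N then cU i j t else if (j < i)%N then - cU j i t else 0.

Lemma cI_anti i j t : cI j i t = - cI i j t.
Proof.
by rewrite /cI; case: ltngtP => h; rewrite ?opprK ?oppr0.
Qed.

Lemma cI_diag i t : cI i i t = 0.
Proof. by rewrite /cI ltnn. Qed.

Lemma cU_tr i j : cU i j 0 + cU i j 3 = 0.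
Proof.
by case: i => [|[|[|[|[|[|i]]]]]]; case: j => [|[|[|[|[|[|[|[|j]]]]]]]].
Qed.

Lemma cI_tr i j : cI i j 0 + cI i j 3 = 0.
Proof.
rewrite /cI; case: ifP => _; first exact: cU_tr.
case: ifP => _ //; by rewrite -opprD cU_tr oppr0.
Qed.

Definition C (R : pzRingType) (i j : nat) : aelt R 2 :=
  (\matrix_(p < 2, q < 2) (cI i j (2 * p + q))%:~R,
   \matrix_(p < 2, q < 2) (cI i j (4 + 2 * p + q))%:~R).

Lemma ent_C (R : pzRingType) i j t : (t < 8)%N -> ent (C R i j) t = (cI i j t)%:~R.
Proof. by case: t => [|[|[|[|[|[|[|[|t]]]]]]]] //= _; rewrite /ent /= mxE. Qed.

Definition phi0 (R : pzRingType) (u v : 'cV[R]_(Vdim 3 2)) : aelt R 2 :=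
  \sum_(i < Vdim 3 2) \sum_(j < Vdim 3 2) (u i 0 * v j 0) *: C R i j.

Lemma ent_phi0 (R : pzRingType) u v t : (t < 8)%N ->
  ent (phi0 u v) t = \sum_(i < Vdim 3 2) \sum_(j < Vdim 3 2) u i 0 * v j 0 * (cI i j t)%:~R :> R.
Proof.
move=> ht; rewrite /phi0 ent_sum; apply: eq_bigr => i _.
rewrite ent_sum; apply: eq_bigr => j _; by rewrite entZ ent_C.
Qed.

Definition Tint (a b c r : nat) : int :=
  - rho8F (cI b c) r a + rho8F (cI a c) r b - rho8F (cI a b) r c.

Lemma Tint_all : all (fun a => all (fun b => all (fun c => all (fun r => Tint a b c r == 0)
   (iota 0 8)) (iota 0 8)) (iota 0 8)) (iota 0 8).
Proof. vm_compute. reflexivity. Qed.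

Lemma Tint0 (a b c r : nat) : (a < 8)%N -> (b < 8)%N -> (c < 8)%N -> (r < 8)%N ->
  Tint a b c r = 0.
Proof.
move=> ha hb hc hr; have /allP/(_ a) := Tint_all.
rewrite mem_iota ha => /(_ isT) /allP/(_ b); rewrite mem_iota hb => /(_ isT).
move=> /allP/(_ c); rewrite mem_iota hc => /(_ isT) /allP/(_ r).
by rewrite mem_iota hr => /(_ isT) /eqP.
Qed.

Definition G (R : pzRingType) (i j r a : nat) : R := (rho8F (cI i j) r a)%:~R.

Lemma rho_phi0 (R : comPzRingType) (u w : 'cV[R]_(Vdim 3 2)) (r a : 'I_(Vdim 3 2)) :
  rhoV 3 (phi0 u w) r a = \sum_(i < Vdim 3 2) \sum_(j < Vdim 3 2) u i 0 * w j 0 * G R i j r a.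
Proof.
rewrite rhoV_ent.
rewrite (@rho8F_ext _ _ (fun t => \sum_(i < Vdim 3 2) \sum_(j < Vdim 3 2)
   u i 0 * w j 0 * (cI i j t)%:~R)); last by move=> t ht; rewrite ent_phi0.
rewrite rho8F_sum; apply: eq_bigr => i _.
rewrite rho8F_sum; apply: eq_bigr => j _.
by rewrite rho8F_scale rho8F_intr.
Qed.

Lemma sum3 (R : zmodType) (I : Type) (s : seq I) (F1 F2 F3 : I -> R) :
  - \sum_(i <- s) F1 i + \sum_(i <- s) F2 i - \sum_(i <- s) F3 i =
  \sum_(i <- s) (- F1 i + F2 i - F3 i).
Proof. by rewrite -sumrN -big_split -sumrB. Qed.

Lemma fin3 (R : comPzRingType) (x : R) (g1 g2 g3 : int) : - g1 + g2 - g3 = 0 ->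
  - (x * g1%:~R) + x * g2%:~R - x * g3%:~R = 0.
Proof.
move=> h; have -> : - (x * g1%:~R) + x * g2%:~R - x * g3%:~R = x * (- g1 + g2 - g3)%:~R.
  by rewrite intrB intrD intrN; ring.
by rewrite h mulr0.
Qed.

Lemma spencer_phi0 (R : comPzRingType) (v1 v2 v3 : 'cV[R]_(Vdim 3 2)) :
  spencer2 (@phi0 R) v1 v2 v3 = 0.
Proof.
apply/matrixP => r z; rewrite [z]ord1 /spencer2 !mxE.
have T1 : \sum_a rhoV 3 (phi0 v2 v3) r a * v1 a 0 =
   \sum_(a < Vdim 3 2) \sum_(b < Vdim 3 2) \sum_(c < Vdim 3 2) v1 a 0 * v2 b 0 * v3 c 0 * G R b c r a.
  apply: eq_bigr => a _; rewrite rho_phi0 mulr_suml; apply: eq_bigr => b _.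
  rewrite mulr_suml; apply: eq_bigr => c _; ring.
have T2 : \sum_b rhoV 3 (phi0 v1 v3) r b * v2 b 0 =
   \sum_(a < Vdim 3 2) \sum_(b < Vdim 3 2) \sum_(c < Vdim 3 2) v1 a 0 * v2 b 0 * v3 c 0 * G R a c r b.
  rewrite [RHS]exchange_big; apply: eq_bigr => b _; rewrite rho_phi0 mulr_suml; apply: eq_bigr => a _.
  rewrite mulr_suml; apply: eq_bigr => c _; ring.
have T3 : \sum_c rhoV 3 (phi0 v1 v2) r c * v3 c 0 =
   \sum_(a < Vdim 3 2) \sum_(b < Vdim 3 2) \sum_(c < Vdim 3 2) v1 a 0 * v2 b 0 * v3 c 0 * G R a b r c.
  transitivity (\sum_(c < Vdim 3 2) \sum_(a < Vdim 3 2) \sum_(b < Vdim 3 2)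
       v1 a 0 * v2 b 0 * v3 c 0 * G R a b r c).
    apply: eq_bigr => c _; rewrite rho_phi0 mulr_suml; apply: eq_bigr => a _.
    rewrite mulr_suml; apply: eq_bigr => b _; ring.
  rewrite exchange_big; apply: eq_bigr => a _; by rewrite exchange_big.
rewrite T1 T2 T3 sum3 big1 // => a _; rewrite sum3 big1 // => b _; rewrite sum3 big1 // => c _.
rewrite /G; apply: fin3.
by have := Tint0 (ltn_ord a) (ltn_ord b) (ltn_ord c) (ltn_ord r); rewrite /Tint.
Qed.

Lemma phi0_hom (R : realType) : is_Hom2 (@phi0 R).
Proof.
split.
- move=> u v; rewrite /in_a trace_ent !ent_phi0 // -big_split big1 // => i _.
  rewrite -big_split big1 // => j _.
  by rewrite /= -mulrDr -intrD cI_tr mulr0.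
- move=> c u u' v; apply: ent_inj => t ht.
  rewrite entD entZ !ent_phi0 // mulr_sumr -big_split; apply: eq_bigr => i _.
  rewrite mulr_sumr -big_split; apply: eq_bigr => j _; rewrite !mxE /=; ring.
- move=> c u v v'; apply: ent_inj => t ht.
  rewrite entD entZ !ent_phi0 // mulr_sumr -big_split; apply: eq_bigr => i _.
  rewrite mulr_sumr -big_split; apply: eq_bigr => j _; rewrite !mxE /=; ring.
- move=> u; apply: ent_inj => t ht; rewrite ent0 ent_phi0 //.
  set S := \sum_i _.
  have HS : S = - S.
    rewrite {1}/S exchange_big /S -sumrN; apply: eq_bigr => i _.
    rewrite -sumrN; apply: eq_bigr => j _.
    by rewrite cI_anti intrN; ring.
  have : S *+ 2 = 0 by rewrite mulr2n {1}HS addNr.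
  by move/eqP; rewrite mulrn_eq0 /= => /eqP.
Qed.

Lemma phi0_ker (R : realType) : in_ker_spencer2 (@phi0 R).
Proof. split; [exact: phi0_hom | exact: spencer_phi0]. Qed.

Lemma sum_delta (R : pzRingType) (i : 'I_(Vdim 3 2)) (F : 'I_(Vdim 3 2) -> R) :
  \sum_(k < Vdim 3 2) (delta_mx i 0 : 'cV[R]_(Vdim 3 2)) k 0 * F k = F i.
Proof.
rewrite (bigD1 i) //= mxE !eqxx mul1r big1 ?addr0 // => k /negbTE nk.
by rewrite mxE nk mul0r.
Qed.

Lemma sum_delta' (R : pzRingType) (i : 'I_(Vdim 3 2)) (F : 'I_(Vdim 3 2) -> R) :
  \sum_(k < Vdim 3 2) F k * (delta_mx i 0 : 'cV[R]_(Vdim 3 2)) k 0 = F i.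
Proof.
rewrite (bigD1 i) //= mxE !eqxx mulr1 big1 ?addr0 // => k /negbTE nk.
by rewrite mxE nk mulr0.
Qed.

Lemma phi0_basis (R : realType) (i j : 'I_(Vdim 3 2)) :
  phi0 (delta_mx i 0) (delta_mx j 0) = C R i j.
Proof.
apply: ent_inj => t ht; rewrite ent_phi0 // ent_C //.
transitivity (\sum_(k < Vdim 3 2) (delta_mx i 0 : 'cV[R]_(Vdim 3 2)) k 0 *
   \sum_(l < Vdim 3 2) (delta_mx j 0 : 'cV[R]_(Vdim 3 2)) l 0 * (cI k l t)%:~R).
  apply: eq_bigr => k _; rewrite mulr_sumr; apply: eq_bigr => l _; by rewrite mulrA.
by rewrite sum_delta sum_delta.
Qed.

Arguments eN : simpl never.

Section Hom.
Variable R : realType.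
Variable phi : 'cV[R]_(Vdim 3 2) -> 'cV[R]_(Vdim 3 2) -> aelt R 2.
Hypothesis Hh : is_Hom2 phi.

Lemma hom_0l v : phi 0 v = 0.
Proof.
case: Hh => _ Hl _ _; have := Hl 1 0 0 v; rewrite !scale1r !addr0.
by move/(congr1 (fun y => y - phi 0 v)); rewrite addrK subrr => /esym.
Qed.

Lemma hom_0r v : phi v 0 = 0.
Proof.
case: Hh => _ _ Hl _; have := Hl 1 v 0 0; rewrite !scale1r !addr0.
by move/(congr1 (fun y => y - phi v 0)); rewrite addrK subrr => /esym.
Qed.

Lemma hom_sum1 (I : Type) (s : seq I) (a : I -> R) (x : I -> 'cV[R]_(Vdim 3 2)) v :
  phi (\sum_(i <- s) a i *: x i) v = \sum_(i <- s) a i *: phi (x i) v.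
Proof.
case: Hh => _ Hl _ _.
elim: s => [|i s IH]; first by rewrite !big_nil hom_0l.
by rewrite !big_cons Hl IH.
Qed.

Lemma hom_sum2 (I : Type) (s : seq I) (a : I -> R) (x : I -> 'cV[R]_(Vdim 3 2)) v :
  phi v (\sum_(i <- s) a i *: x i) = \sum_(i <- s) a i *: phi v (x i).
Proof.
case: Hh => _ _ Hl _.
elim: s => [|i s IH]; first by rewrite !big_nil hom_0r.
by rewrite !big_cons Hl IH.
Qed.

Lemma col_expand (u : 'cV[R]_(Vdim 3 2)) : u = \sum_i u i 0 *: delta_mx i 0.
Proof.
rewrite {1}(matrix_sum_delta u); apply: eq_bigr => i _; by rewrite big_ord1.
Qed.

Lemma hom_expand u v : phi u v =
  \sum_i \sum_j (u i 0 * v j 0) *: phi (delta_mx i 0) (delta_mx j 0).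
Proof.
rewrite {1}(col_expand u) hom_sum1; apply: eq_bigr => i _.
rewrite {1}(col_expand v) hom_sum2 scaler_sumr; apply: eq_bigr => j _.
by rewrite scalerA.
Qed.

Lemma hom_anti u v : phi v u = - phi u v.
Proof.
case: Hh => _ Hl1 Hl2 Ha.
have D1 : forall x y w, phi (x + y) w = phi x w + phi y w.
  by move=> x y w; have := Hl1 1 x y w; rewrite !scale1r.
have D2 : forall x y w, phi w (x + y) = phi w x + phi w y.
  by move=> x y w; have := Hl2 1 w x y; rewrite !scale1r.
have := Ha (u + v).
rewrite D1 !D2 !Ha add0r addr0.
by move/(congr1 (fun y => y - phi u v)); rewrite addrAC subrr add0r sub0r.
Qed.

End Hom.

Lemma entN (R : pzRingType) (x : aelt R 2) t : ent (- x) t = - ent x t.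
Proof. by rewrite -scaleN1r entZ mulN1r. Qed.
Lemma dispatch (P : nat -> nat -> nat -> Prop) :
  P 0 1 0 ->
  P 0 1 1 ->
  P 0 1 2 ->
  P 0 1 3 ->
  P 0 1 4 ->
  P 0 1 5 ->
  P 0 1 6 ->
  P 0 1 7 ->
  P 0 2 0 ->
  P 0 2 1 ->
  P 0 2 2 ->
  P 0 2 3 ->
  P 0 2 4 ->
  P 0 2 5 ->
  P 0 2 6 ->
  P 0 2 7 ->
  P 0 3 0 ->
  P 0 3 1 ->
  P 0 3 2 ->
  P 0 3 3 ->
  P 0 3 4 ->
  P 0 3 5 ->
  P 0 3 6 ->
  P 0 3 7 ->
  P 0 4 0 ->
  P 0 4 1 ->
  P 0 4 2 ->
  P 0 4 3 ->
  P 0 4 4 ->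
  P 0 4 5 ->
  P 0 4 6 ->
  P 0 4 7 ->
  P 0 5 0 ->
  P 0 5 1 ->
  P 0 5 2 ->
  P 0 5 3 ->
  P 0 5 4 ->
  P 0 5 5 ->
  P 0 5 6 ->
  P 0 5 7 ->
  P 0 6 0 ->
  P 0 6 1 ->
  P 0 6 2 ->
  P 0 6 3 ->
  P 0 6 4 ->
  P 0 6 5 ->
  P 0 6 6 ->
  P 0 6 7 ->
  P 0 7 0 ->
  P 0 7 1 ->
  P 0 7 2 ->
  P 0 7 3 ->
  P 0 7 4 ->
  P 0 7 5 ->
  P 0 7 6 ->
  P 0 7 7 ->
  P 1 2 0 ->
  P 1 2 1 ->
  P 1 2 2 ->
  P 1 2 3 ->
  P 1 2 4 ->
  P 1 2 5 ->
  P 1 2 6 ->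
  P 1 2 7 ->
  P 1 3 0 ->
  P 1 3 1 ->
  P 1 3 2 ->
  P 1 3 3 ->
  P 1 3 4 ->
  P 1 3 5 ->
  P 1 3 6 ->
  P 1 3 7 ->
  P 1 4 0 ->
  P 1 4 1 ->
  P 1 4 2 ->
  P 1 4 3 ->
  P 1 4 4 ->
  P 1 4 5 ->
  P 1 4 6 ->
  P 1 4 7 ->
  P 1 5 0 ->
  P 1 5 1 ->
  P 1 5 2 ->
  P 1 5 3 ->
  P 1 5 4 ->
  P 1 5 5 ->
  P 1 5 6 ->
  P 1 5 7 ->
  P 1 6 0 ->
  P 1 6 1 ->
  P 1 6 2 ->
  P 1 6 3 ->
  P 1 6 4 ->
  P 1 6 5 ->
  P 1 6 6 ->
  P 1 6 7 ->
  P 1 7 0 ->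
  P 1 7 1 ->
  P 1 7 2 ->
  P 1 7 3 ->
  P 1 7 4 ->
  P 1 7 5 ->
  P 1 7 6 ->
  P 1 7 7 ->
  P 2 3 0 ->
  P 2 3 1 ->
  P 2 3 2 ->
  P 2 3 3 ->
  P 2 3 4 ->
  P 2 3 5 ->
  P 2 3 6 ->
  P 2 3 7 ->
  P 2 4 0 ->
  P 2 4 1 ->
  P 2 4 2 ->
  P 2 4 3 ->
  P 2 4 4 ->
  P 2 4 5 ->
  P 2 4 6 ->
  P 2 4 7 ->
  P 2 5 0 ->
  P 2 5 1 ->
  P 2 5 2 ->
  P 2 5 3 ->
  P 2 5 4 ->
  P 2 5 5 ->
  P 2 5 6 ->
  P 2 5 7 ->
  P 2 6 0 ->
  P 2 6 1 ->
  P 2 6 2 ->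
  P 2 6 3 ->
  P 2 6 4 ->
  P 2 6 5 ->
  P 2 6 6 ->
  P 2 6 7 ->
  P 2 7 0 ->
  P 2 7 1 ->
  P 2 7 2 ->
  P 2 7 3 ->
  P 2 7 4 ->
  P 2 7 5 ->
  P 2 7 6 ->
  P 2 7 7 ->
  P 3 4 0 ->
  P 3 4 1 ->
  P 3 4 2 ->
  P 3 4 3 ->
  P 3 4 4 ->
  P 3 4 5 ->
  P 3 4 6 ->
  P 3 4 7 ->
  P 3 5 0 ->
  P 3 5 1 ->
  P 3 5 2 ->
  P 3 5 3 ->
  P 3 5 4 ->
  P 3 5 5 ->
  P 3 5 6 ->
  P 3 5 7 ->
  P 3 6 0 ->
  P 3 6 1 ->
  P 3 6 2 ->
  P 3 6 3 ->
  P 3 6 4 ->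
  P 3 6 5 ->
  P 3 6 6 ->
  P 3 6 7 ->
  P 3 7 0 ->
  P 3 7 1 ->
  P 3 7 2 ->
  P 3 7 3 ->
  P 3 7 4 ->
  P 3 7 5 ->
  P 3 7 6 ->
  P 3 7 7 ->
  P 4 5 0 ->
  P 4 5 1 ->
  P 4 5 2 ->
  P 4 5 3 ->
  P 4 5 4 ->
  P 4 5 5 ->
  P 4 5 6 ->
  P 4 5 7 ->
  P 4 6 0 ->
  P 4 6 1 ->
  P 4 6 2 ->
  P 4 6 3 ->
  P 4 6 4 ->
  P 4 6 5 ->
  P 4 6 6 ->
  P 4 6 7 ->
  P 4 7 0 ->
  P 4 7 1 ->
  P 4 7 2 ->
  P 4 7 3 ->
  P 4 7 4 ->
  P 4 7 5 ->
  P 4 7 6 ->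
  P 4 7 7 ->
  P 5 6 0 ->
  P 5 6 1 ->
  P 5 6 2 ->
  P 5 6 3 ->
  P 5 6 4 ->
  P 5 6 5 ->
  P 5 6 6 ->
  P 5 6 7 ->
  P 5 7 0 ->
  P 5 7 1 ->
  P 5 7 2 ->
  P 5 7 3 ->
  P 5 7 4 ->
  P 5 7 5 ->
  P 5 7 6 ->
  P 5 7 7 ->
  P 6 7 0 ->
  P 6 7 1 ->
  P 6 7 2 ->
  P 6 7 3 ->
  P 6 7 4 ->
  P 6 7 5 ->
  P 6 7 6 ->
  P 6 7 7 ->
  forall i j t, (i < j)%N -> (j < 8)%N -> (t < 8)%N -> P i j t.
Proof.
move=> H_0_1_0 H_0_1_1 H_0_1_2 H_0_1_3 H_0_1_4 H_0_1_5 H_0_1_6 H_0_1_7 H_0_2_0 H_0_2_1 H_0_2_2 H_0_2_3 H_0_2_4 H_0_2_5 H_0_2_6 H_0_2_7 H_0_3_0 H_0_3_1 H_0_3_2 H_0_3_3 H_0_3_4 H_0_3_5 H_0_3_6 H_0_3_7 H_0_4_0 H_0_4_1 H_0_4_2 H_0_4_3 H_0_4_4 H_0_4_5 H_0_4_6 H_0_4_7 H_0_5_0 H_0_5_1 H_0_5_2 H_0_5_3 H_0_5_4 H_0_5_5 H_0_5_6 H_0_5_7 H_0_6_0 H_0_6_1 H_0_6_2 H_0_6_3 H_0_6_4 H_0_6_5 H_0_6_6 H_0_6_7 H_0_7_0 H_0_7_1 H_0_7_2 H_0_7_3 H_0_7_4 H_0_7_5 H_0_7_6 H_0_7_7 H_1_2_0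 H_1_2_1 H_1_2_2 H_1_2_3 H_1_2_4 H_1_2_5 H_1_2_6 H_1_2_7 H_1_3_0 H_1_3_1 H_1_3_2 H_1_3_3 H_1_3_4 H_1_3_5 H_1_3_6 H_1_3_7 H_1_4_0 H_1_4_1 H_1_4_2 H_1_4_3 H_1_4_4 H_1_4_5 H_1_4_6 H_1_4_7 H_1_5_0 H_1_5_1 H_1_5_2 H_1_5_3 H_1_5_4 H_1_5_5 H_1_5_6 H_1_5_7 H_1_6_0 H_1_6_1 H_1_6_2 H_1_6_3 H_1_6_4 H_1_6_5 H_1_6_6 H_1_6_7 H_1_7_0 H_1_7_1 H_1_7_2 H_1_7_3 H_1_7_4 H_1_7_5 H_1_7_6 H_1_7_7 H_2_3_0 H_2_3_1 H_2_3_2 H_2_3_3 H_2_3_4 H_2_3_5 H_2_3_6 H_2_3_7 H_2_4_0 H_2_4_1 H_2_4_2 H_2_4_3 H_2_4_4 H_2_4_5 H_2_4_6 H_2_4_7 H_2_5_0 H_2_5_1 H_2_5_2 H_2_5_3 H_2_5_4 H_2_5_5 H_2_5_6 H_2_5_7 H_2_6_0 H_2_6_1 H_2_6_2 H_2_6_3 H_2_6_4 H_2_6_5 H_2_6_6 H_2_6_7 H_2_7_0 H_2_7_1 H_2_7_2 H_2_7_3 H_2_7_4 H_2_7_5 H_2_7_6 H_2_7_7 H_3_4_0 H_3_4_1 H_3_4_2 H_3_4_3 H_3_4_4 H_3_4_5 H_3_4_6 H_3_4_7 H_3_5_0 H_3_5_1 H_3_5_2 H_3_5_3 H_3_5_4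 H_3_5_5 H_3_5_6 H_3_5_7 H_3_6_0 H_3_6_1 H_3_6_2 H_3_6_3 H_3_6_4 H_3_6_5 H_3_6_6 H_3_6_7 H_3_7_0 H_3_7_1 H_3_7_2 H_3_7_3 H_3_7_4 H_3_7_5 H_3_7_6 H_3_7_7 H_4_5_0 H_4_5_1 H_4_5_2 H_4_5_3 H_4_5_4 H_4_5_5 H_4_5_6 H_4_5_7 H_4_6_0 H_4_6_1 H_4_6_2 H_4_6_3 H_4_6_4 H_4_6_5 H_4_6_6 H_4_6_7 H_4_7_0 H_4_7_1 H_4_7_2 H_4_7_3 H_4_7_4 H_4_7_5 H_4_7_6 H_4_7_7 H_5_6_0 H_5_6_1 H_5_6_2 H_5_6_3 H_5_6_4 H_5_6_5 H_5_6_6 H_5_6_7 H_5_7_0 H_5_7_1 H_5_7_2 H_5_7_3 H_5_7_4 H_5_7_5 H_5_7_6 H_5_7_7 H_6_7_0 H_6_7_1 H_6_7_2 H_6_7_3 H_6_7_4 H_6_7_5 H_6_7_6 H_6_7_7 i j t hij hj ht.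
case: t ht => [|[|[|[|[|[|[|[|t]]]]]]]] ht.
case: j hij hj => [|[|[|[|[|[|[|[|j]]]]]]]] hij hj.
case: i hij => [|[|[|[|[|[|[|[|i]]]]]]]] hij.
discriminate hij.
discriminate hij.
discriminate hij.
discriminate hij.
discriminate hij.
discriminate hij.
discriminate hij.
discriminate hij.
discriminate hij.
case: i hij => [|[|[|[|[|[|[|[|i]]]]]]]] hij.
exact: H_0_1_0.
discriminate hij.
discriminate hij.
discriminate hij.
discriminate hij.
discriminate hij.
discriminate hij.
discriminate hij.
discriminate hij.
case: i hij => [|[|[|[|[|[|[|[|i]]]]]]]] hij.
exact: H_0_2_0.
exact: H_1_2_0.
discriminate hij.
discriminate hij.
discriminate hij.
discriminate hij.
discriminate hij.
discriminate hij.
discriminate hij.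
case: i hij => [|[|[|[|[|[|[|[|i]]]]]]]] hij.
exact: H_0_3_0.
exact: H_1_3_0.
exact: H_2_3_0.
discriminate hij.
discriminate hij.
discriminate hij.
discriminate hij.
discriminate hij.
discriminate hij.
case: i hij => [|[|[|[|[|[|[|[|i]]]]]]]] hij.
exact: H_0_4_0.
exact: H_1_4_0.
exact: H_2_4_0.
exact: H_3_4_0.
discriminate hij.
discriminate hij.
discriminate hij.
discriminate hij.
discriminate hij.
case: i hij => [|[|[|[|[|[|[|[|i]]]]]]]] hij.
exact: H_0_5_0.
exact: H_1_5_0.
exact: H_2_5_0.
exact: H_3_5_0.
exact: H_4_5_0.
discriminate hij.
discriminate hij.
discriminate hij.
discriminate hij.
case: i hij => [|[|[|[|[|[|[|[|i]]]]]]]] hij.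
exact: H_0_6_0.
exact: H_1_6_0.
exact: H_2_6_0.
exact: H_3_6_0.
exact: H_4_6_0.
exact: H_5_6_0.
discriminate hij.
discriminate hij.
discriminate hij.
case: i hij => [|[|[|[|[|[|[|[|i]]]]]]]] hij.
exact: H_0_7_0.
exact: H_1_7_0.
exact: H_2_7_0.
exact: H_3_7_0.
exact: H_4_7_0.
exact: H_5_7_0.
exact: H_6_7_0.
discriminate hij.
discriminate hij.
discriminate hj.
case: j hij hj => [|[|[|[|[|[|[|[|j]]]]]]]] hij hj.
case: i hij => [|[|[|[|[|[|[|[|i]]]]]]]] hij.
discriminate hij.
discriminate hij.
discriminate hij.
discriminate hij.
discriminate hij.
discriminate hij.
discriminate hij.
discriminate hij.
discriminate hij.
case: i hij => [|[|[|[|[|[|[|[|i]]]]]]]] hij.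
exact: H_0_1_1.
discriminate hij.
discriminate hij.
discriminate hij.
discriminate hij.
discriminate hij.
discriminate hij.
discriminate hij.
discriminate hij.
case: i hij => [|[|[|[|[|[|[|[|i]]]]]]]] hij.
exact: H_0_2_1.
exact: H_1_2_1.
discriminate hij.
discriminate hij.
discriminate hij.
discriminate hij.
discriminate hij.
discriminate hij.
discriminate hij.
case: i hij => [|[|[|[|[|[|[|[|i]]]]]]]] hij.
exact: H_0_3_1.
exact: H_1_3_1.
exact: H_2_3_1.
discriminate hij.
discriminate hij.
discriminate hij.
discriminate hij.
discriminate hij.
discriminate hij.
case: i hij => [|[|[|[|[|[|[|[|i]]]]]]]] hij.
exact: H_0_4_1.
exact: H_1_4_1.
exact: H_2_4_1.
exact: H_3_4_1.
discriminate hij.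
discriminate hij.
discriminate hij.
discriminate hij.
discriminate hij.
case: i hij => [|[|[|[|[|[|[|[|i]]]]]]]] hij.
exact: H_0_5_1.
exact: H_1_5_1.
exact: H_2_5_1.
exact: H_3_5_1.
exact: H_4_5_1.
discriminate hij.
discriminate hij.
discriminate hij.
discriminate hij.
case: i hij => [|[|[|[|[|[|[|[|i]]]]]]]] hij.
exact: H_0_6_1.
exact: H_1_6_1.
exact: H_2_6_1.
exact: H_3_6_1.
exact: H_4_6_1.
exact: H_5_6_1.
discriminate hij.
discriminate hij.
discriminate hij.
case: i hij => [|[|[|[|[|[|[|[|i]]]]]]]] hij.
exact: H_0_7_1.
exact: H_1_7_1.
exact: H_2_7_1.
exact: H_3_7_1.
exact: H_4_7_1.
exact: H_5_7_1.
exact: H_6_7_1.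
discriminate hij.
discriminate hij.
discriminate hj.
case: j hij hj => [|[|[|[|[|[|[|[|j]]]]]]]] hij hj.
case: i hij => [|[|[|[|[|[|[|[|i]]]]]]]] hij.
discriminate hij.
discriminate hij.
discriminate hij.
discriminate hij.
discriminate hij.
discriminate hij.
discriminate hij.
discriminate hij.
discriminate hij.
case: i hij => [|[|[|[|[|[|[|[|i]]]]]]]] hij.
exact: H_0_1_2.
discriminate hij.
discriminate hij.
discriminate hij.
discriminate hij.
discriminate hij.
discriminate hij.
discriminate hij.
discriminate hij.
case: i hij => [|[|[|[|[|[|[|[|i]]]]]]]] hij.
exact: H_0_2_2.
exact: H_1_2_2.
discriminate hij.
discriminate hij.
discriminate hij.
discriminate hij.
discriminate hij.
discriminate hij.
discriminate hij.
case: i hij => [|[|[|[|[|[|[|[|i]]]]]]]] hij.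
exact: H_0_3_2.
exact: H_1_3_2.
exact: H_2_3_2.
discriminate hij.
discriminate hij.
discriminate hij.
discriminate hij.
discriminate hij.
discriminate hij.
case: i hij => [|[|[|[|[|[|[|[|i]]]]]]]] hij.
exact: H_0_4_2.
exact: H_1_4_2.
exact: H_2_4_2.
exact: H_3_4_2.
discriminate hij.
discriminate hij.
discriminate hij.
discriminate hij.
discriminate hij.
case: i hij => [|[|[|[|[|[|[|[|i]]]]]]]] hij.
exact: H_0_5_2.
exact: H_1_5_2.
exact: H_2_5_2.
exact: H_3_5_2.
exact: H_4_5_2.
discriminate hij.
discriminate hij.
discriminate hij.
discriminate hij.
case: i hij => [|[|[|[|[|[|[|[|i]]]]]]]] hij.
exact: H_0_6_2.
exact: H_1_6_2.
exact: H_2_6_2.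
exact: H_3_6_2.
exact: H_4_6_2.
exact: H_5_6_2.
discriminate hij.
discriminate hij.
discriminate hij.
case: i hij => [|[|[|[|[|[|[|[|i]]]]]]]] hij.
exact: H_0_7_2.
exact: H_1_7_2.
exact: H_2_7_2.
exact: H_3_7_2.
exact: H_4_7_2.
exact: H_5_7_2.
exact: H_6_7_2.
discriminate hij.
discriminate hij.
discriminate hj.
case: j hij hj => [|[|[|[|[|[|[|[|j]]]]]]]] hij hj.
case: i hij => [|[|[|[|[|[|[|[|i]]]]]]]] hij.
discriminate hij.
discriminate hij.
discriminate hij.
discriminate hij.
discriminate hij.
discriminate hij.
discriminate hij.
discriminate hij.
discriminate hij.
case: i hij => [|[|[|[|[|[|[|[|i]]]]]]]] hij.
exact: H_0_1_3.
discriminate hij.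
discriminate hij.
discriminate hij.
discriminate hij.
discriminate hij.
discriminate hij.
discriminate hij.
discriminate hij.
case: i hij => [|[|[|[|[|[|[|[|i]]]]]]]] hij.
exact: H_0_2_3.
exact: H_1_2_3.
discriminate hij.
discriminate hij.
discriminate hij.
discriminate hij.
discriminate hij.
discriminate hij.
discriminate hij.
case: i hij => [|[|[|[|[|[|[|[|i]]]]]]]] hij.
exact: H_0_3_3.
exact: H_1_3_3.
exact: H_2_3_3.
discriminate hij.
discriminate hij.
discriminate hij.
discriminate hij.
discriminate hij.
discriminate hij.
case: i hij => [|[|[|[|[|[|[|[|i]]]]]]]] hij.
exact: H_0_4_3.
exact: H_1_4_3.
exact: H_2_4_3.
exact: H_3_4_3.
discriminate hij.
discriminate hij.
discriminate hij.
discriminate hij.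
discriminate hij.
case: i hij => [|[|[|[|[|[|[|[|i]]]]]]]] hij.
exact: H_0_5_3.
exact: H_1_5_3.
exact: H_2_5_3.
exact: H_3_5_3.
exact: H_4_5_3.
discriminate hij.
discriminate hij.
discriminate hij.
discriminate hij.
case: i hij => [|[|[|[|[|[|[|[|i]]]]]]]] hij.
exact: H_0_6_3.
exact: H_1_6_3.
exact: H_2_6_3.
exact: H_3_6_3.
exact: H_4_6_3.
exact: H_5_6_3.
discriminate hij.
discriminate hij.
discriminate hij.
case: i hij => [|[|[|[|[|[|[|[|i]]]]]]]] hij.
exact: H_0_7_3.
exact: H_1_7_3.
exact: H_2_7_3.
exact: H_3_7_3.
exact: H_4_7_3.
exact: H_5_7_3.
exact: H_6_7_3.
discriminate hij.
discriminate hij.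
discriminate hj.
case: j hij hj => [|[|[|[|[|[|[|[|j]]]]]]]] hij hj.
case: i hij => [|[|[|[|[|[|[|[|i]]]]]]]] hij.
discriminate hij.
discriminate hij.
discriminate hij.
discriminate hij.
discriminate hij.
discriminate hij.
discriminate hij.
discriminate hij.
discriminate hij.
case: i hij => [|[|[|[|[|[|[|[|i]]]]]]]] hij.
exact: H_0_1_4.
discriminate hij.
discriminate hij.
discriminate hij.
discriminate hij.
discriminate hij.
discriminate hij.
discriminate hij.
discriminate hij.
case: i hij => [|[|[|[|[|[|[|[|i]]]]]]]] hij.
exact: H_0_2_4.
exact: H_1_2_4.
discriminate hij.
discriminate hij.
discriminate hij.
discriminate hij.
discriminate hij.
discriminate hij.
discriminate hij.
case: i hij => [|[|[|[|[|[|[|[|i]]]]]]]] hij.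
exact: H_0_3_4.
exact: H_1_3_4.
exact: H_2_3_4.
discriminate hij.
discriminate hij.
discriminate hij.
discriminate hij.
discriminate hij.
discriminate hij.
case: i hij => [|[|[|[|[|[|[|[|i]]]]]]]] hij.
exact: H_0_4_4.
exact: H_1_4_4.
exact: H_2_4_4.
exact: H_3_4_4.
discriminate hij.
discriminate hij.
discriminate hij.
discriminate hij.
discriminate hij.
case: i hij => [|[|[|[|[|[|[|[|i]]]]]]]] hij.
exact: H_0_5_4.
exact: H_1_5_4.
exact: H_2_5_4.
exact: H_3_5_4.
exact: H_4_5_4.
discriminate hij.
discriminate hij.
discriminate hij.
discriminate hij.
case: i hij => [|[|[|[|[|[|[|[|i]]]]]]]] hij.
exact: H_0_6_4.
exact: H_1_6_4.
exact: H_2_6_4.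
exact: H_3_6_4.
exact: H_4_6_4.
exact: H_5_6_4.
discriminate hij.
discriminate hij.
discriminate hij.
case: i hij => [|[|[|[|[|[|[|[|i]]]]]]]] hij.
exact: H_0_7_4.
exact: H_1_7_4.
exact: H_2_7_4.
exact: H_3_7_4.
exact: H_4_7_4.
exact: H_5_7_4.
exact: H_6_7_4.
discriminate hij.
discriminate hij.
discriminate hj.
case: j hij hj => [|[|[|[|[|[|[|[|j]]]]]]]] hij hj.
case: i hij => [|[|[|[|[|[|[|[|i]]]]]]]] hij.
discriminate hij.
discriminate hij.
discriminate hij.
discriminate hij.
discriminate hij.
discriminate hij.
discriminate hij.
discriminate hij.
discriminate hij.
case: i hij => [|[|[|[|[|[|[|[|i]]]]]]]] hij.
exact: H_0_1_5.
discriminate hij.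
discriminate hij.
discriminate hij.
discriminate hij.
discriminate hij.
discriminate hij.
discriminate hij.
discriminate hij.
case: i hij => [|[|[|[|[|[|[|[|i]]]]]]]] hij.
exact: H_0_2_5.
exact: H_1_2_5.
discriminate hij.
discriminate hij.
discriminate hij.
discriminate hij.
discriminate hij.
discriminate hij.
discriminate hij.
case: i hij => [|[|[|[|[|[|[|[|i]]]]]]]] hij.
exact: H_0_3_5.
exact: H_1_3_5.
exact: H_2_3_5.
discriminate hij.
discriminate hij.
discriminate hij.
discriminate hij.
discriminate hij.
discriminate hij.
case: i hij => [|[|[|[|[|[|[|[|i]]]]]]]] hij.
exact: H_0_4_5.
exact: H_1_4_5.
exact: H_2_4_5.
exact: H_3_4_5.
discriminate hij.
discriminate hij.
discriminate hij.
discriminate hij.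
discriminate hij.
case: i hij => [|[|[|[|[|[|[|[|i]]]]]]]] hij.
exact: H_0_5_5.
exact: H_1_5_5.
exact: H_2_5_5.
exact: H_3_5_5.
exact: H_4_5_5.
discriminate hij.
discriminate hij.
discriminate hij.
discriminate hij.
case: i hij => [|[|[|[|[|[|[|[|i]]]]]]]] hij.
exact: H_0_6_5.
exact: H_1_6_5.
exact: H_2_6_5.
exact: H_3_6_5.
exact: H_4_6_5.
exact: H_5_6_5.
discriminate hij.
discriminate hij.
discriminate hij.
case: i hij => [|[|[|[|[|[|[|[|i]]]]]]]] hij.
exact: H_0_7_5.
exact: H_1_7_5.
exact: H_2_7_5.
exact: H_3_7_5.
exact: H_4_7_5.
exact: H_5_7_5.
exact: H_6_7_5.
discriminate hij.
discriminate hij.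
discriminate hj.
case: j hij hj => [|[|[|[|[|[|[|[|j]]]]]]]] hij hj.
case: i hij => [|[|[|[|[|[|[|[|i]]]]]]]] hij.
discriminate hij.
discriminate hij.
discriminate hij.
discriminate hij.
discriminate hij.
discriminate hij.
discriminate hij.
discriminate hij.
discriminate hij.
case: i hij => [|[|[|[|[|[|[|[|i]]]]]]]] hij.
exact: H_0_1_6.
discriminate hij.
discriminate hij.
discriminate hij.
discriminate hij.
discriminate hij.
discriminate hij.
discriminate hij.
discriminate hij.
case: i hij => [|[|[|[|[|[|[|[|i]]]]]]]] hij.
exact: H_0_2_6.
exact: H_1_2_6.
discriminate hij.
discriminate hij.
discriminate hij.
discriminate hij.
discriminate hij.
discriminate hij.
discriminate hij.
case: i hij => [|[|[|[|[|[|[|[|i]]]]]]]] hij.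
exact: H_0_3_6.
exact: H_1_3_6.
exact: H_2_3_6.
discriminate hij.
discriminate hij.
discriminate hij.
discriminate hij.
discriminate hij.
discriminate hij.
case: i hij => [|[|[|[|[|[|[|[|i]]]]]]]] hij.
exact: H_0_4_6.
exact: H_1_4_6.
exact: H_2_4_6.
exact: H_3_4_6.
discriminate hij.
discriminate hij.
discriminate hij.
discriminate hij.
discriminate hij.
case: i hij => [|[|[|[|[|[|[|[|i]]]]]]]] hij.
exact: H_0_5_6.
exact: H_1_5_6.
exact: H_2_5_6.
exact: H_3_5_6.
exact: H_4_5_6.
discriminate hij.
discriminate hij.
discriminate hij.
discriminate hij.
case: i hij => [|[|[|[|[|[|[|[|i]]]]]]]] hij.
exact: H_0_6_6.
exact: H_1_6_6.
exact: H_2_6_6.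
exact: H_3_6_6.
exact: H_4_6_6.
exact: H_5_6_6.
discriminate hij.
discriminate hij.
discriminate hij.
case: i hij => [|[|[|[|[|[|[|[|i]]]]]]]] hij.
exact: H_0_7_6.
exact: H_1_7_6.
exact: H_2_7_6.
exact: H_3_7_6.
exact: H_4_7_6.
exact: H_5_7_6.
exact: H_6_7_6.
discriminate hij.
discriminate hij.
discriminate hj.
case: j hij hj => [|[|[|[|[|[|[|[|j]]]]]]]] hij hj.
case: i hij => [|[|[|[|[|[|[|[|i]]]]]]]] hij.
discriminate hij.
discriminate hij.
discriminate hij.
discriminate hij.
discriminate hij.
discriminate hij.
discriminate hij.
discriminate hij.
discriminate hij.
case: i hij => [|[|[|[|[|[|[|[|i]]]]]]]] hij.
exact: H_0_1_7.
discriminate hij.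
discriminate hij.
discriminate hij.
discriminate hij.
discriminate hij.
discriminate hij.
discriminate hij.
discriminate hij.
case: i hij => [|[|[|[|[|[|[|[|i]]]]]]]] hij.
exact: H_0_2_7.
exact: H_1_2_7.
discriminate hij.
discriminate hij.
discriminate hij.
discriminate hij.
discriminate hij.
discriminate hij.
discriminate hij.
case: i hij => [|[|[|[|[|[|[|[|i]]]]]]]] hij.
exact: H_0_3_7.
exact: H_1_3_7.
exact: H_2_3_7.
discriminate hij.
discriminate hij.
discriminate hij.
discriminate hij.
discriminate hij.
discriminate hij.
case: i hij => [|[|[|[|[|[|[|[|i]]]]]]]] hij.
exact: H_0_4_7.
exact: H_1_4_7.
exact: H_2_4_7.
exact: H_3_4_7.
discriminate hij.
discriminate hij.
discriminate hij.
discriminate hij.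
discriminate hij.
case: i hij => [|[|[|[|[|[|[|[|i]]]]]]]] hij.
exact: H_0_5_7.
exact: H_1_5_7.
exact: H_2_5_7.
exact: H_3_5_7.
exact: H_4_5_7.
discriminate hij.
discriminate hij.
discriminate hij.
discriminate hij.
case: i hij => [|[|[|[|[|[|[|[|i]]]]]]]] hij.
exact: H_0_6_7.
exact: H_1_6_7.
exact: H_2_6_7.
exact: H_3_6_7.
exact: H_4_6_7.
exact: H_5_6_7.
discriminate hij.
discriminate hij.
discriminate hij.
case: i hij => [|[|[|[|[|[|[|[|i]]]]]]]] hij.
exact: H_0_7_7.
exact: H_1_7_7.
exact: H_2_7_7.
exact: H_3_7_7.
exact: H_4_7_7.
exact: H_5_7_7.
exact: H_6_7_7.
discriminate hij.
discriminate hij.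
discriminate hj.
discriminate ht.
Qed.


Lemma facts (R : realType) (phi : 'cV[R]_(Vdim 3 2) -> 'cV[R]_(Vdim 3 2) -> aelt R 2) :
  is_Hom2 phi -> (forall v1 v2 v3, spencer2 phi v1 v2 v3 = 0) ->
  forall i j t, (i < j)%N -> (j < 8)%N -> (t < 8)%N ->
  ent (phi (eN R i) (eN R j)) t = ent (phi (eN R 4%N) (eN R 5%N)) 2%N / 4 * (cI i j t)%:~R.
Proof.
move=> [Hin _ _ _] Hsp.
have F_4_5_2 : ent (phi (eN R 4%N) (eN R 5%N)) 2%N = ent (phi (eN R 4%N) (eN R 5%N)) 2%N / 4 * (cI 4 5 2)%:~R by rewrite /cI /=; lra.

have F_0_1_2 : ent (phi (eN R 0%N) (eN R 1%N)) 2%N = ent (phi (eN R 4%N) (eN R 5%N)) 2%N / 4 * (cI 0 1 2)%:~R.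
{
  have E0 := sp_entry Hsp (a:=0%N) (b:=1%N) (c:=2%N) (r:=4%N) isT isT isT isT; rewrite /rho8F /= in E0.
  clear -E0.
  rewrite /cI /= . lra. }
have F_0_4_2 : ent (phi (eN R 0%N) (eN R 4%N)) 2%N = ent (phi (eN R 4%N) (eN R 5%N)) 2%N / 4 * (cI 0 4 2)%:~R.
{
  have E0 := sp_entry Hsp (a:=0%N) (b:=1%N) (c:=4%N) (r:=3%N) isT isT isT isT; rewrite /rho8F /= in E0.
  clear -E0.
  rewrite /cI /= . lra. }
have F_0_1_6 : ent (phi (eN R 0%N) (eN R 1%N)) 6%N = ent (phi (eN R 4%N) (eN R 5%N)) 2%N / 4 * (cI 0 1 6)%:~R.
{
  have E0 := sp_entry Hsp (a:=0%N) (b:=1%N) (c:=4%N) (r:=5%N) isT isT isT isT; rewrite /rho8F /= in E0.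
  clear -E0.
  rewrite /cI /= . lra. }
have F_1_5_2 : ent (phi (eN R 1%N) (eN R 5%N)) 2%N = ent (phi (eN R 4%N) (eN R 5%N)) 2%N / 4 * (cI 1 5 2)%:~R.
{
  have E0 := sp_entry Hsp (a:=0%N) (b:=1%N) (c:=5%N) (r:=2%N) isT isT isT isT; rewrite /rho8F /= in E0.
  clear -E0.
  rewrite /cI /= . lra. }
have F_0_1_5 : ent (phi (eN R 0%N) (eN R 1%N)) 5%N = ent (phi (eN R 4%N) (eN R 5%N)) 2%N / 4 * (cI 0 1 5)%:~R.
{
  have E0 := sp_entry Hsp (a:=0%N) (b:=1%N) (c:=5%N) (r:=4%N) isT isT isT isT; rewrite /rho8F /= in E0.
  clear -E0.
  rewrite /cI /= . lra. }
have F_1_6_2 : ent (phi (eN R 1%N) (eN R 6%N)) 2%N = ent (phi (eN R 4%N) (eN R 5%N)) 2%N / 4 * (cI 1 6 2)%:~R.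
{
  have E0 := sp_entry Hsp (a:=0%N) (b:=1%N) (c:=6%N) (r:=2%N) isT isT isT isT; rewrite /rho8F /= in E0.
  clear -E0.
  rewrite /cI /= . lra. }
have F_0_6_2 : ent (phi (eN R 0%N) (eN R 6%N)) 2%N = ent (phi (eN R 4%N) (eN R 5%N)) 2%N / 4 * (cI 0 6 2)%:~R.
{
  have E0 := sp_entry Hsp (a:=0%N) (b:=1%N) (c:=6%N) (r:=3%N) isT isT isT isT; rewrite /rho8F /= in E0.
  clear -E0.
  rewrite /cI /= . lra. }
have F_0_1_1 : ent (phi (eN R 0%N) (eN R 1%N)) 1%N = ent (phi (eN R 4%N) (eN R 5%N)) 2%N / 4 * (cI 0 1 1)%:~R.
{
  have E0 := sp_entry Hsp (a:=0%N) (b:=1%N) (c:=6%N) (r:=4%N) isT isT isT isT; rewrite /rho8F /= in E0.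
  clear -E0.
  rewrite /cI /= . lra. }
have F_1_7_2 : ent (phi (eN R 1%N) (eN R 7%N)) 2%N = ent (phi (eN R 4%N) (eN R 5%N)) 2%N / 4 * (cI 1 7 2)%:~R.
{
  have E0 := sp_entry Hsp (a:=0%N) (b:=1%N) (c:=7%N) (r:=2%N) isT isT isT isT; rewrite /rho8F /= in E0.
  clear -E0.
  rewrite /cI /= . lra. }
have F_0_7_2 : ent (phi (eN R 0%N) (eN R 7%N)) 2%N = ent (phi (eN R 4%N) (eN R 5%N)) 2%N / 4 * (cI 0 7 2)%:~R.
{
  have E0 := sp_entry Hsp (a:=0%N) (b:=1%N) (c:=7%N) (r:=3%N) isT isT isT isT; rewrite /rho8F /= in E0.
  clear -E0.
  rewrite /cI /= . lra. }
have F_0_3_2 : ent (phi (eN R 0%N) (eN R 3%N)) 2%N = ent (phi (eN R 4%N) (eN R 5%N)) 2%N / 4 * (cI 0 3 2)%:~R.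
{
  have E0 := sp_entry Hsp (a:=0%N) (b:=2%N) (c:=3%N) (r:=4%N) isT isT isT isT; rewrite /rho8F /= in E0.
  clear -E0.
  rewrite /cI /= . lra. }
have F_0_2_2 : ent (phi (eN R 0%N) (eN R 2%N)) 2%N = ent (phi (eN R 4%N) (eN R 5%N)) 2%N / 4 * (cI 0 2 2)%:~R.
{
  have E0 := sp_entry Hsp (a:=0%N) (b:=2%N) (c:=3%N) (r:=5%N) isT isT isT isT; rewrite /rho8F /= in E0.
  clear -E0.
  rewrite /cI /= . lra. }
have F_2_4_6 : ent (phi (eN R 2%N) (eN R 4%N)) 6%N = ent (phi (eN R 4%N) (eN R 5%N)) 2%N / 4 * (cI 2 4 6)%:~R.
{
  have E0 := sp_entry Hsp (a:=0%N) (b:=2%N) (c:=4%N) (r:=1%N) isT isT isT isT; rewrite /rho8F /= in E0.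
  clear -E0.
  rewrite /cI /= . lra. }
have F_0_4_6 : ent (phi (eN R 0%N) (eN R 4%N)) 6%N = ent (phi (eN R 4%N) (eN R 5%N)) 2%N / 4 * (cI 0 4 6)%:~R.
{
  have E0 := sp_entry Hsp (a:=0%N) (b:=2%N) (c:=4%N) (r:=3%N) isT isT isT isT; rewrite /rho8F /= in E0.
  clear -E0.
  rewrite /cI /= . lra. }
have F_0_2_6 : ent (phi (eN R 0%N) (eN R 2%N)) 6%N = ent (phi (eN R 4%N) (eN R 5%N)) 2%N / 4 * (cI 0 2 6)%:~R.
{
  have E0 := sp_entry Hsp (a:=0%N) (b:=2%N) (c:=4%N) (r:=5%N) isT isT isT isT; rewrite /rho8F /= in E0.
  clear -E0.
  rewrite /cI /= . lra. }
have F_2_5_6 : ent (phi (eN R 2%N) (eN R 5%N)) 6%N = ent (phi (eN R 4%N) (eN R 5%N)) 2%N / 4 * (cI 2 5 6)%:~R.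
{
  have E0 := sp_entry Hsp (a:=0%N) (b:=2%N) (c:=5%N) (r:=1%N) isT isT isT isT; rewrite /rho8F /= in E0.
  clear -E0.
  rewrite /cI /= . lra. }
have F_2_6_6 : ent (phi (eN R 2%N) (eN R 6%N)) 6%N = ent (phi (eN R 4%N) (eN R 5%N)) 2%N / 4 * (cI 2 6 6)%:~R.
{
  have E0 := sp_entry Hsp (a:=0%N) (b:=2%N) (c:=6%N) (r:=1%N) isT isT isT isT; rewrite /rho8F /= in E0.
  clear -E0.
  rewrite /cI /= . lra. }
have F_0_6_6 : ent (phi (eN R 0%N) (eN R 6%N)) 6%N = ent (phi (eN R 4%N) (eN R 5%N)) 2%N / 4 * (cI 0 6 6)%:~R.
{
  have E0 := sp_entry Hsp (a:=0%N) (b:=2%N) (c:=6%N) (r:=3%N) isT isT isT isT; rewrite /rho8F /= in E0.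
  clear -E0.
  rewrite /cI /= . lra. }
have F_0_2_1 : ent (phi (eN R 0%N) (eN R 2%N)) 1%N = ent (phi (eN R 4%N) (eN R 5%N)) 2%N / 4 * (cI 0 2 1)%:~R.
{
  have E0 := sp_entry Hsp (a:=0%N) (b:=2%N) (c:=6%N) (r:=4%N) isT isT isT isT; rewrite /rho8F /= in E0.
  clear -E0 F_0_6_2.
  rewrite /cI /= in F_0_6_2 *. lra. }
have F_2_7_6 : ent (phi (eN R 2%N) (eN R 7%N)) 6%N = ent (phi (eN R 4%N) (eN R 5%N)) 2%N / 4 * (cI 2 7 6)%:~R.
{
  have E0 := sp_entry Hsp (a:=0%N) (b:=2%N) (c:=7%N) (r:=1%N) isT isT isT isT; rewrite /rho8F /= in E0.
  clear -E0.
  rewrite /cI /= . lra. }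
have F_0_7_6 : ent (phi (eN R 0%N) (eN R 7%N)) 6%N = ent (phi (eN R 4%N) (eN R 5%N)) 2%N / 4 * (cI 0 7 6)%:~R.
{
  have E0 := sp_entry Hsp (a:=0%N) (b:=2%N) (c:=7%N) (r:=3%N) isT isT isT isT; rewrite /rho8F /= in E0.
  clear -E0.
  rewrite /cI /= . lra. }
have F_0_2_5 : ent (phi (eN R 0%N) (eN R 2%N)) 5%N = ent (phi (eN R 4%N) (eN R 5%N)) 2%N / 4 * (cI 0 2 5)%:~R.
{
  have E0 := sp_entry Hsp (a:=0%N) (b:=2%N) (c:=7%N) (r:=6%N) isT isT isT isT; rewrite /rho8F /= in E0.
  clear -E0.
  rewrite /cI /= . lra. }
have F_0_3_6 : ent (phi (eN R 0%N) (eN R 3%N)) 6%N = ent (phi (eN R 4%N) (eN R 5%N)) 2%N / 4 * (cI 0 3 6)%:~R.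
{
  have E0 := sp_entry Hsp (a:=0%N) (b:=3%N) (c:=4%N) (r:=5%N) isT isT isT isT; rewrite /rho8F /= in E0.
  clear -E0 F_0_4_2.
  rewrite /cI /= in F_0_4_2 *. lra. }
have F_0_3_5 : ent (phi (eN R 0%N) (eN R 3%N)) 5%N = ent (phi (eN R 4%N) (eN R 5%N)) 2%N / 4 * (cI 0 3 5)%:~R.
{
  have E0 := sp_entry Hsp (a:=0%N) (b:=3%N) (c:=5%N) (r:=4%N) isT isT isT isT; rewrite /rho8F /= in E0.
  clear -E0.
  rewrite /cI /= . lra. }
have F_0_3_1 : ent (phi (eN R 0%N) (eN R 3%N)) 1%N = ent (phi (eN R 4%N) (eN R 5%N)) 2%N / 4 * (cI 0 3 1)%:~R.
{
  have E0 := sp_entry Hsp (a:=0%N) (b:=3%N) (c:=6%N) (r:=4%N) isT isT isT isT; rewrite /rho8F /= in E0.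
  clear -E0.
  rewrite /cI /= . lra. }
have F_4_5_6 : ent (phi (eN R 4%N) (eN R 5%N)) 6%N = ent (phi (eN R 4%N) (eN R 5%N)) 2%N / 4 * (cI 4 5 6)%:~R.
{
  have E0 := sp_entry Hsp (a:=0%N) (b:=4%N) (c:=5%N) (r:=1%N) isT isT isT isT; rewrite /rho8F /= in E0.
  clear -E0.
  rewrite /cI /= . lra. }
have F_0_5_1 : ent (phi (eN R 0%N) (eN R 5%N)) 1%N = ent (phi (eN R 4%N) (eN R 5%N)) 2%N / 4 * (cI 0 5 1)%:~R.
{
  have E0 := sp_entry Hsp (a:=0%N) (b:=4%N) (c:=5%N) (r:=2%N) isT isT isT isT; rewrite /rho8F /= in E0.
  clear -E0.
  rewrite /cI /= . lra. }
have F_0_4_1 : ent (phi (eN R 0%N) (eN R 4%N)) 1%N = ent (phi (eN R 4%N) (eN R 5%N)) 2%N / 4 * (cI 0 4 1)%:~R.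
{
  have E0 := sp_entry Hsp (a:=0%N) (b:=4%N) (c:=5%N) (r:=3%N) isT isT isT isT; rewrite /rho8F /= in E0.
  clear -E0.
  rewrite /cI /= . lra. }
have F_0_5_2 : ent (phi (eN R 0%N) (eN R 5%N)) 2%N = ent (phi (eN R 4%N) (eN R 5%N)) 2%N / 4 * (cI 0 5 2)%:~R.
{
  have E0 := sp_entry Hsp (a:=0%N) (b:=4%N) (c:=5%N) (r:=6%N) isT isT isT isT; rewrite /rho8F /= in E0.
  clear -E0.
  rewrite /cI /= . lra. }
have F_4_6_6 : ent (phi (eN R 4%N) (eN R 6%N)) 6%N = ent (phi (eN R 4%N) (eN R 5%N)) 2%N / 4 * (cI 4 6 6)%:~R.
{
  have E0 := sp_entry Hsp (a:=0%N) (b:=4%N) (c:=6%N) (r:=1%N) isT isT isT isT; rewrite /rho8F /= in E0.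
  clear -E0.
  rewrite /cI /= . lra. }
have F_4_7_6 : ent (phi (eN R 4%N) (eN R 7%N)) 6%N = ent (phi (eN R 4%N) (eN R 5%N)) 2%N / 4 * (cI 4 7 6)%:~R.
{
  have E0 := sp_entry Hsp (a:=0%N) (b:=4%N) (c:=7%N) (r:=1%N) isT isT isT isT; rewrite /rho8F /= in E0.
  clear -E0.
  rewrite /cI /= . lra. }
have F_0_4_5 : ent (phi (eN R 0%N) (eN R 4%N)) 5%N = ent (phi (eN R 4%N) (eN R 5%N)) 2%N / 4 * (cI 0 4 5)%:~R.
{
  have E0 := sp_entry Hsp (a:=0%N) (b:=4%N) (c:=7%N) (r:=6%N) isT isT isT isT; rewrite /rho8F /= in E0.
  clear -E0 F_0_7_2.
  rewrite /cI /= in F_0_7_2 *. lra. }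
have F_5_6_6 : ent (phi (eN R 5%N) (eN R 6%N)) 6%N = ent (phi (eN R 4%N) (eN R 5%N)) 2%N / 4 * (cI 5 6 6)%:~R.
{
  have E0 := sp_entry Hsp (a:=0%N) (b:=5%N) (c:=6%N) (r:=1%N) isT isT isT isT; rewrite /rho8F /= in E0.
  clear -E0.
  rewrite /cI /= . lra. }
have F_5_6_2 : ent (phi (eN R 5%N) (eN R 6%N)) 2%N = ent (phi (eN R 4%N) (eN R 5%N)) 2%N / 4 * (cI 5 6 2)%:~R.
{
  have E0 := sp_entry Hsp (a:=0%N) (b:=5%N) (c:=6%N) (r:=2%N) isT isT isT isT; rewrite /rho8F /= in E0.
  clear -E0.
  rewrite /cI /= . lra. }
have F_0_6_1 : ent (phi (eN R 0%N) (eN R 6%N)) 1%N = ent (phi (eN R 4%N) (eN R 5%N)) 2%N / 4 * (cI 0 6 1)%:~R.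
{
  have E0 := sp_entry Hsp (a:=0%N) (b:=5%N) (c:=6%N) (r:=3%N) isT isT isT isT; rewrite /rho8F /= in E0.
  clear -E0.
  rewrite /cI /= . lra. }
have F_0_6_5 : ent (phi (eN R 0%N) (eN R 6%N)) 5%N = ent (phi (eN R 4%N) (eN R 5%N)) 2%N / 4 * (cI 0 6 5)%:~R.
{
  have E0 := sp_entry Hsp (a:=0%N) (b:=5%N) (c:=6%N) (r:=4%N) isT isT isT isT; rewrite /rho8F /= in E0.
  clear -E0 F_0_5_1.
  rewrite /cI /= in F_0_5_1 *. lra. }
have F_0_5_6 : ent (phi (eN R 0%N) (eN R 5%N)) 6%N = ent (phi (eN R 4%N) (eN R 5%N)) 2%N / 4 * (cI 0 5 6)%:~R.
{
  have E0 := sp_entry Hsp (a:=0%N) (b:=5%N) (c:=6%N) (r:=7%N) isT isT isT isT; rewrite /rho8F /= in E0.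
  clear -E0 F_0_6_2.
  rewrite /cI /= in F_0_6_2 *. lra. }
have F_5_7_6 : ent (phi (eN R 5%N) (eN R 7%N)) 6%N = ent (phi (eN R 4%N) (eN R 5%N)) 2%N / 4 * (cI 5 7 6)%:~R.
{
  have E0 := sp_entry Hsp (a:=0%N) (b:=5%N) (c:=7%N) (r:=1%N) isT isT isT isT; rewrite /rho8F /= in E0.
  clear -E0.
  rewrite /cI /= . lra. }
have F_5_7_2 : ent (phi (eN R 5%N) (eN R 7%N)) 2%N = ent (phi (eN R 4%N) (eN R 5%N)) 2%N / 4 * (cI 5 7 2)%:~R.
{
  have E0 := sp_entry Hsp (a:=0%N) (b:=5%N) (c:=7%N) (r:=2%N) isT isT isT isT; rewrite /rho8F /= in E0.
  clear -E0.
  rewrite /cI /= . lra. }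
have F_0_7_1 : ent (phi (eN R 0%N) (eN R 7%N)) 1%N = ent (phi (eN R 4%N) (eN R 5%N)) 2%N / 4 * (cI 0 7 1)%:~R.
{
  have E0 := sp_entry Hsp (a:=0%N) (b:=5%N) (c:=7%N) (r:=3%N) isT isT isT isT; rewrite /rho8F /= in E0.
  clear -E0.
  rewrite /cI /= . lra. }
have F_0_7_5 : ent (phi (eN R 0%N) (eN R 7%N)) 5%N = ent (phi (eN R 4%N) (eN R 5%N)) 2%N / 4 * (cI 0 7 5)%:~R.
{
  have E0 := sp_entry Hsp (a:=0%N) (b:=5%N) (c:=7%N) (r:=4%N) isT isT isT isT; rewrite /rho8F /= in E0.
  clear -E0.
  rewrite /cI /= . lra. }
have F_0_5_5 : ent (phi (eN R 0%N) (eN R 5%N)) 5%N = ent (phi (eN R 4%N) (eN R 5%N)) 2%N / 4 * (cI 0 5 5)%:~R.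
{
  have E0 := sp_entry Hsp (a:=0%N) (b:=5%N) (c:=7%N) (r:=6%N) isT isT isT isT; rewrite /rho8F /= in E0.
  clear -E0.
  rewrite /cI /= . lra. }
have F_6_7_6 : ent (phi (eN R 6%N) (eN R 7%N)) 6%N = ent (phi (eN R 4%N) (eN R 5%N)) 2%N / 4 * (cI 6 7 6)%:~R.
{
  have E0 := sp_entry Hsp (a:=0%N) (b:=6%N) (c:=7%N) (r:=1%N) isT isT isT isT; rewrite /rho8F /= in E0.
  clear -E0.
  rewrite /cI /= . lra. }
have F_6_7_2 : ent (phi (eN R 6%N) (eN R 7%N)) 2%N = ent (phi (eN R 4%N) (eN R 5%N)) 2%N / 4 * (cI 6 7 2)%:~R.
{
  have E0 := sp_entry Hsp (a:=0%N) (b:=6%N) (c:=7%N) (r:=2%N) isT isT isT isT; rewrite /rho8F /= in E0.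
  clear -E0.
  rewrite /cI /= . lra. }
have F_1_3_2 : ent (phi (eN R 1%N) (eN R 3%N)) 2%N = ent (phi (eN R 4%N) (eN R 5%N)) 2%N / 4 * (cI 1 3 2)%:~R.
{
  have E0 := sp_entry Hsp (a:=1%N) (b:=2%N) (c:=3%N) (r:=4%N) isT isT isT isT; rewrite /rho8F /= in E0.
  clear -E0.
  rewrite /cI /= . lra. }
have F_1_2_2 : ent (phi (eN R 1%N) (eN R 2%N)) 2%N = ent (phi (eN R 4%N) (eN R 5%N)) 2%N / 4 * (cI 1 2 2)%:~R.
{
  have E0 := sp_entry Hsp (a:=1%N) (b:=2%N) (c:=3%N) (r:=5%N) isT isT isT isT; rewrite /rho8F /= in E0.
  clear -E0.
  rewrite /cI /= . lra. }
have F_1_2_6 : ent (phi (eN R 1%N) (eN R 2%N)) 6%N = ent (phi (eN R 4%N) (eN R 5%N)) 2%N / 4 * (cI 1 2 6)%:~R.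
{
  have E0 := sp_entry Hsp (a:=1%N) (b:=2%N) (c:=4%N) (r:=5%N) isT isT isT isT; rewrite /rho8F /= in E0.
  clear -E0.
  rewrite /cI /= . lra. }
have F_1_2_5 : ent (phi (eN R 1%N) (eN R 2%N)) 5%N = ent (phi (eN R 4%N) (eN R 5%N)) 2%N / 4 * (cI 1 2 5)%:~R.
{
  have E0 := sp_entry Hsp (a:=1%N) (b:=2%N) (c:=5%N) (r:=4%N) isT isT isT isT; rewrite /rho8F /= in E0.
  clear -E0 F_1_5_2.
  rewrite /cI /= in F_1_5_2 *. lra. }
have F_1_2_1 : ent (phi (eN R 1%N) (eN R 2%N)) 1%N = ent (phi (eN R 4%N) (eN R 5%N)) 2%N / 4 * (cI 1 2 1)%:~R.
{
  have E0 := sp_entry Hsp (a:=1%N) (b:=2%N) (c:=6%N) (r:=4%N) isT isT isT isT; rewrite /rho8F /= in E0.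
  clear -E0 F_1_6_2.
  rewrite /cI /= in F_1_6_2 *. lra. }
have F_3_4_5 : ent (phi (eN R 3%N) (eN R 4%N)) 5%N = ent (phi (eN R 4%N) (eN R 5%N)) 2%N / 4 * (cI 3 4 5)%:~R.
{
  have E0 := sp_entry Hsp (a:=1%N) (b:=3%N) (c:=4%N) (r:=0%N) isT isT isT isT; rewrite /rho8F /= in E0.
  clear -E0.
  rewrite /cI /= . lra. }
have F_3_5_5 : ent (phi (eN R 3%N) (eN R 5%N)) 5%N = ent (phi (eN R 4%N) (eN R 5%N)) 2%N / 4 * (cI 3 5 5)%:~R.
{
  have E0 := sp_entry Hsp (a:=1%N) (b:=3%N) (c:=5%N) (r:=0%N) isT isT isT isT; rewrite /rho8F /= in E0.
  clear -E0.
  rewrite /cI /= . lra. }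
have F_1_5_5 : ent (phi (eN R 1%N) (eN R 5%N)) 5%N = ent (phi (eN R 4%N) (eN R 5%N)) 2%N / 4 * (cI 1 5 5)%:~R.
{
  have E0 := sp_entry Hsp (a:=1%N) (b:=3%N) (c:=5%N) (r:=2%N) isT isT isT isT; rewrite /rho8F /= in E0.
  clear -E0.
  rewrite /cI /= . lra. }
have F_1_3_5 : ent (phi (eN R 1%N) (eN R 3%N)) 5%N = ent (phi (eN R 4%N) (eN R 5%N)) 2%N / 4 * (cI 1 3 5)%:~R.
{
  have E0 := sp_entry Hsp (a:=1%N) (b:=3%N) (c:=5%N) (r:=4%N) isT isT isT isT; rewrite /rho8F /= in E0.
  clear -E0.
  rewrite /cI /= . lra. }
have F_3_6_5 : ent (phi (eN R 3%N) (eN R 6%N)) 5%N = ent (phi (eN R 4%N) (eN R 5%N)) 2%N / 4 * (cI 3 6 5)%:~R.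
{
  have E0 := sp_entry Hsp (a:=1%N) (b:=3%N) (c:=6%N) (r:=0%N) isT isT isT isT; rewrite /rho8F /= in E0.
  clear -E0.
  rewrite /cI /= . lra. }
have F_1_6_5 : ent (phi (eN R 1%N) (eN R 6%N)) 5%N = ent (phi (eN R 4%N) (eN R 5%N)) 2%N / 4 * (cI 1 6 5)%:~R.
{
  have E0 := sp_entry Hsp (a:=1%N) (b:=3%N) (c:=6%N) (r:=2%N) isT isT isT isT; rewrite /rho8F /= in E0.
  clear -E0.
  rewrite /cI /= . lra. }
have F_1_3_1 : ent (phi (eN R 1%N) (eN R 3%N)) 1%N = ent (phi (eN R 4%N) (eN R 5%N)) 2%N / 4 * (cI 1 3 1)%:~R.
{
  have E0 := sp_entry Hsp (a:=1%N) (b:=3%N) (c:=6%N) (r:=4%N) isT isT isT isT; rewrite /rho8F /= in E0.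
  clear -E0.
  rewrite /cI /= . lra. }
have F_1_3_6 : ent (phi (eN R 1%N) (eN R 3%N)) 6%N = ent (phi (eN R 4%N) (eN R 5%N)) 2%N / 4 * (cI 1 3 6)%:~R.
{
  have E0 := sp_entry Hsp (a:=1%N) (b:=3%N) (c:=6%N) (r:=7%N) isT isT isT isT; rewrite /rho8F /= in E0.
  clear -E0.
  rewrite /cI /= . lra. }
have F_3_7_5 : ent (phi (eN R 3%N) (eN R 7%N)) 5%N = ent (phi (eN R 4%N) (eN R 5%N)) 2%N / 4 * (cI 3 7 5)%:~R.
{
  have E0 := sp_entry Hsp (a:=1%N) (b:=3%N) (c:=7%N) (r:=0%N) isT isT isT isT; rewrite /rho8F /= in E0.
  clear -E0.
  rewrite /cI /= . lra. }
have F_1_7_5 : ent (phi (eN R 1%N) (eN R 7%N)) 5%N = ent (phi (eN R 4%N) (eN R 5%N)) 2%N / 4 * (cI 1 7 5)%:~R.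
{
  have E0 := sp_entry Hsp (a:=1%N) (b:=3%N) (c:=7%N) (r:=2%N) isT isT isT isT; rewrite /rho8F /= in E0.
  clear -E0.
  rewrite /cI /= . lra. }
have F_4_5_5 : ent (phi (eN R 4%N) (eN R 5%N)) 5%N = ent (phi (eN R 4%N) (eN R 5%N)) 2%N / 4 * (cI 4 5 5)%:~R.
{
  have E0 := sp_entry Hsp (a:=1%N) (b:=4%N) (c:=5%N) (r:=0%N) isT isT isT isT; rewrite /rho8F /= in E0.
  clear -E0.
  rewrite /cI /= . lra. }
have F_1_5_1 : ent (phi (eN R 1%N) (eN R 5%N)) 1%N = ent (phi (eN R 4%N) (eN R 5%N)) 2%N / 4 * (cI 1 5 1)%:~R.
{
  have E0 := sp_entry Hsp (a:=1%N) (b:=4%N) (c:=5%N) (r:=2%N) isT isT isT isT; rewrite /rho8F /= in E0.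
  clear -E0.
  rewrite /cI /= . lra. }
have F_1_4_1 : ent (phi (eN R 1%N) (eN R 4%N)) 1%N = ent (phi (eN R 4%N) (eN R 5%N)) 2%N / 4 * (cI 1 4 1)%:~R.
{
  have E0 := sp_entry Hsp (a:=1%N) (b:=4%N) (c:=5%N) (r:=3%N) isT isT isT isT; rewrite /rho8F /= in E0.
  clear -E0.
  rewrite /cI /= . lra. }
have F_1_4_2 : ent (phi (eN R 1%N) (eN R 4%N)) 2%N = ent (phi (eN R 4%N) (eN R 5%N)) 2%N / 4 * (cI 1 4 2)%:~R.
{
  have E0 := sp_entry Hsp (a:=1%N) (b:=4%N) (c:=5%N) (r:=7%N) isT isT isT isT; rewrite /rho8F /= in E0.
  clear -E0.
  rewrite /cI /= . lra. }
have F_4_6_5 : ent (phi (eN R 4%N) (eN R 6%N)) 5%N = ent (phi (eN R 4%N) (eN R 5%N)) 2%N / 4 * (cI 4 6 5)%:~R.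
{
  have E0 := sp_entry Hsp (a:=1%N) (b:=4%N) (c:=6%N) (r:=0%N) isT isT isT isT; rewrite /rho8F /= in E0.
  clear -E0.
  rewrite /cI /= . lra. }
have F_1_6_1 : ent (phi (eN R 1%N) (eN R 6%N)) 1%N = ent (phi (eN R 4%N) (eN R 5%N)) 2%N / 4 * (cI 1 6 1)%:~R.
{
  have E0 := sp_entry Hsp (a:=1%N) (b:=4%N) (c:=6%N) (r:=2%N) isT isT isT isT; rewrite /rho8F /= in E0.
  clear -E0.
  rewrite /cI /= . lra. }
have F_4_6_2 : ent (phi (eN R 4%N) (eN R 6%N)) 2%N = ent (phi (eN R 4%N) (eN R 5%N)) 2%N / 4 * (cI 4 6 2)%:~R.
{
  have E0 := sp_entry Hsp (a:=1%N) (b:=4%N) (c:=6%N) (r:=3%N) isT isT isT isT; rewrite /rho8F /= in E0.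
  clear -E0.
  rewrite /cI /= . lra. }
have F_1_6_6 : ent (phi (eN R 1%N) (eN R 6%N)) 6%N = ent (phi (eN R 4%N) (eN R 5%N)) 2%N / 4 * (cI 1 6 6)%:~R.
{
  have E0 := sp_entry Hsp (a:=1%N) (b:=4%N) (c:=6%N) (r:=5%N) isT isT isT isT; rewrite /rho8F /= in E0.
  clear -E0.
  rewrite /cI /= . lra. }
have F_1_4_6 : ent (phi (eN R 1%N) (eN R 4%N)) 6%N = ent (phi (eN R 4%N) (eN R 5%N)) 2%N / 4 * (cI 1 4 6)%:~R.
{
  have E0 := sp_entry Hsp (a:=1%N) (b:=4%N) (c:=6%N) (r:=7%N) isT isT isT isT; rewrite /rho8F /= in E0.
  clear -E0.
  rewrite /cI /= . lra. }
have F_4_7_5 : ent (phi (eN R 4%N) (eN R 7%N)) 5%N = ent (phi (eN R 4%N) (eN R 5%N)) 2%N / 4 * (cI 4 7 5)%:~R.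
{
  have E0 := sp_entry Hsp (a:=1%N) (b:=4%N) (c:=7%N) (r:=0%N) isT isT isT isT; rewrite /rho8F /= in E0.
  clear -E0.
  rewrite /cI /= . lra. }
have F_1_7_1 : ent (phi (eN R 1%N) (eN R 7%N)) 1%N = ent (phi (eN R 4%N) (eN R 5%N)) 2%N / 4 * (cI 1 7 1)%:~R.
{
  have E0 := sp_entry Hsp (a:=1%N) (b:=4%N) (c:=7%N) (r:=2%N) isT isT isT isT; rewrite /rho8F /= in E0.
  clear -E0.
  rewrite /cI /= . lra. }
have F_4_7_2 : ent (phi (eN R 4%N) (eN R 7%N)) 2%N = ent (phi (eN R 4%N) (eN R 5%N)) 2%N / 4 * (cI 4 7 2)%:~R.
{
  have E0 := sp_entry Hsp (a:=1%N) (b:=4%N) (c:=7%N) (r:=3%N) isT isT isT isT; rewrite /rho8F /= in E0.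
  clear -E0.
  rewrite /cI /= . lra. }
have F_1_7_6 : ent (phi (eN R 1%N) (eN R 7%N)) 6%N = ent (phi (eN R 4%N) (eN R 5%N)) 2%N / 4 * (cI 1 7 6)%:~R.
{
  have E0 := sp_entry Hsp (a:=1%N) (b:=4%N) (c:=7%N) (r:=5%N) isT isT isT isT; rewrite /rho8F /= in E0.
  clear -E0 F_1_4_1.
  rewrite /cI /= in F_1_4_1 *. lra. }
have F_1_4_5 : ent (phi (eN R 1%N) (eN R 4%N)) 5%N = ent (phi (eN R 4%N) (eN R 5%N)) 2%N / 4 * (cI 1 4 5)%:~R.
{
  have E0 := sp_entry Hsp (a:=1%N) (b:=4%N) (c:=7%N) (r:=6%N) isT isT isT isT; rewrite /rho8F /= in E0.
  clear -E0 F_1_7_2.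
  rewrite /cI /= in F_1_7_2 *. lra. }
have F_5_6_5 : ent (phi (eN R 5%N) (eN R 6%N)) 5%N = ent (phi (eN R 4%N) (eN R 5%N)) 2%N / 4 * (cI 5 6 5)%:~R.
{
  have E0 := sp_entry Hsp (a:=1%N) (b:=5%N) (c:=6%N) (r:=0%N) isT isT isT isT; rewrite /rho8F /= in E0.
  clear -E0.
  rewrite /cI /= . lra. }
have F_1_5_6 : ent (phi (eN R 1%N) (eN R 5%N)) 6%N = ent (phi (eN R 4%N) (eN R 5%N)) 2%N / 4 * (cI 1 5 6)%:~R.
{
  have E0 := sp_entry Hsp (a:=1%N) (b:=5%N) (c:=6%N) (r:=7%N) isT isT isT isT; rewrite /rho8F /= in E0.
  clear -E0 F_1_6_2.
  rewrite /cI /= in F_1_6_2 *. lra. }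
have F_5_7_5 : ent (phi (eN R 5%N) (eN R 7%N)) 5%N = ent (phi (eN R 4%N) (eN R 5%N)) 2%N / 4 * (cI 5 7 5)%:~R.
{
  have E0 := sp_entry Hsp (a:=1%N) (b:=5%N) (c:=7%N) (r:=0%N) isT isT isT isT; rewrite /rho8F /= in E0.
  clear -E0.
  rewrite /cI /= . lra. }
have F_6_7_5 : ent (phi (eN R 6%N) (eN R 7%N)) 5%N = ent (phi (eN R 4%N) (eN R 5%N)) 2%N / 4 * (cI 6 7 5)%:~R.
{
  have E0 := sp_entry Hsp (a:=1%N) (b:=6%N) (c:=7%N) (r:=0%N) isT isT isT isT; rewrite /rho8F /= in E0.
  clear -E0.
  rewrite /cI /= . lra. }
have F_3_4_1 : ent (phi (eN R 3%N) (eN R 4%N)) 1%N = ent (phi (eN R 4%N) (eN R 5%N)) 2%N / 4 * (cI 3 4 1)%:~R.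
{
  have E0 := sp_entry Hsp (a:=2%N) (b:=3%N) (c:=4%N) (r:=0%N) isT isT isT isT; rewrite /rho8F /= in E0.
  clear -E0.
  rewrite /cI /= . lra. }
have F_2_4_1 : ent (phi (eN R 2%N) (eN R 4%N)) 1%N = ent (phi (eN R 4%N) (eN R 5%N)) 2%N / 4 * (cI 2 4 1)%:~R.
{
  have E0 := sp_entry Hsp (a:=2%N) (b:=3%N) (c:=4%N) (r:=1%N) isT isT isT isT; rewrite /rho8F /= in E0.
  clear -E0.
  rewrite /cI /= . lra. }
have F_2_3_2 : ent (phi (eN R 2%N) (eN R 3%N)) 2%N = ent (phi (eN R 4%N) (eN R 5%N)) 2%N / 4 * (cI 2 3 2)%:~R.
{
  have E0 := sp_entry Hsp (a:=2%N) (b:=3%N) (c:=4%N) (r:=6%N) isT isT isT isT; rewrite /rho8F /= in E0.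
  clear -E0.
  rewrite /cI /= . lra. }
have F_3_5_1 : ent (phi (eN R 3%N) (eN R 5%N)) 1%N = ent (phi (eN R 4%N) (eN R 5%N)) 2%N / 4 * (cI 3 5 1)%:~R.
{
  have E0 := sp_entry Hsp (a:=2%N) (b:=3%N) (c:=5%N) (r:=0%N) isT isT isT isT; rewrite /rho8F /= in E0.
  clear -E0.
  rewrite /cI /= . lra. }
have F_2_5_1 : ent (phi (eN R 2%N) (eN R 5%N)) 1%N = ent (phi (eN R 4%N) (eN R 5%N)) 2%N / 4 * (cI 2 5 1)%:~R.
{
  have E0 := sp_entry Hsp (a:=2%N) (b:=3%N) (c:=5%N) (r:=1%N) isT isT isT isT; rewrite /rho8F /= in E0.
  clear -E0.
  rewrite /cI /= . lra. }
have F_3_6_1 : ent (phi (eN R 3%N) (eN R 6%N)) 1%N = ent (phi (eN R 4%N) (eN R 5%N)) 2%N / 4 * (cI 3 6 1)%:~R.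
{
  have E0 := sp_entry Hsp (a:=2%N) (b:=3%N) (c:=6%N) (r:=0%N) isT isT isT isT; rewrite /rho8F /= in E0.
  clear -E0.
  rewrite /cI /= . lra. }
have F_2_6_1 : ent (phi (eN R 2%N) (eN R 6%N)) 1%N = ent (phi (eN R 4%N) (eN R 5%N)) 2%N / 4 * (cI 2 6 1)%:~R.
{
  have E0 := sp_entry Hsp (a:=2%N) (b:=3%N) (c:=6%N) (r:=1%N) isT isT isT isT; rewrite /rho8F /= in E0.
  clear -E0.
  rewrite /cI /= . lra. }
have F_2_6_2 : ent (phi (eN R 2%N) (eN R 6%N)) 2%N = ent (phi (eN R 4%N) (eN R 5%N)) 2%N / 4 * (cI 2 6 2)%:~R.
{
  have E0 := sp_entry Hsp (a:=2%N) (b:=3%N) (c:=6%N) (r:=5%N) isT isT isT isT; rewrite /rho8F /= in E0.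
  clear -E0.
  rewrite /cI /= . lra. }
have F_2_3_6 : ent (phi (eN R 2%N) (eN R 3%N)) 6%N = ent (phi (eN R 4%N) (eN R 5%N)) 2%N / 4 * (cI 2 3 6)%:~R.
{
  have E0 := sp_entry Hsp (a:=2%N) (b:=3%N) (c:=6%N) (r:=7%N) isT isT isT isT; rewrite /rho8F /= in E0.
  clear -E0.
  rewrite /cI /= . lra. }
have F_3_7_1 : ent (phi (eN R 3%N) (eN R 7%N)) 1%N = ent (phi (eN R 4%N) (eN R 5%N)) 2%N / 4 * (cI 3 7 1)%:~R.
{
  have E0 := sp_entry Hsp (a:=2%N) (b:=3%N) (c:=7%N) (r:=0%N) isT isT isT isT; rewrite /rho8F /= in E0.
  clear -E0.
  rewrite /cI /= . lra. }
have F_2_7_1 : ent (phi (eN R 2%N) (eN R 7%N)) 1%N = ent (phi (eN R 4%N) (eN R 5%N)) 2%N / 4 * (cI 2 7 1)%:~R.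
{
  have E0 := sp_entry Hsp (a:=2%N) (b:=3%N) (c:=7%N) (r:=1%N) isT isT isT isT; rewrite /rho8F /= in E0.
  clear -E0.
  rewrite /cI /= . lra. }
have F_3_7_2 : ent (phi (eN R 3%N) (eN R 7%N)) 2%N = ent (phi (eN R 4%N) (eN R 5%N)) 2%N / 4 * (cI 3 7 2)%:~R.
{
  have E0 := sp_entry Hsp (a:=2%N) (b:=3%N) (c:=7%N) (r:=4%N) isT isT isT isT; rewrite /rho8F /= in E0.
  clear -E0.
  rewrite /cI /= . lra. }
have F_2_3_5 : ent (phi (eN R 2%N) (eN R 3%N)) 5%N = ent (phi (eN R 4%N) (eN R 5%N)) 2%N / 4 * (cI 2 3 5)%:~R.
{
  have E0 := sp_entry Hsp (a:=2%N) (b:=3%N) (c:=7%N) (r:=6%N) isT isT isT isT; rewrite /rho8F /= in E0.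
  clear -E0.
  rewrite /cI /= . lra. }
have F_4_5_1 : ent (phi (eN R 4%N) (eN R 5%N)) 1%N = ent (phi (eN R 4%N) (eN R 5%N)) 2%N / 4 * (cI 4 5 1)%:~R.
{
  have E0 := sp_entry Hsp (a:=2%N) (b:=4%N) (c:=5%N) (r:=0%N) isT isT isT isT; rewrite /rho8F /= in E0.
  clear -E0.
  rewrite /cI /= . lra. }
have F_2_5_2 : ent (phi (eN R 2%N) (eN R 5%N)) 2%N = ent (phi (eN R 4%N) (eN R 5%N)) 2%N / 4 * (cI 2 5 2)%:~R.
{
  have E0 := sp_entry Hsp (a:=2%N) (b:=4%N) (c:=5%N) (r:=6%N) isT isT isT isT; rewrite /rho8F /= in E0.
  clear -E0.
  rewrite /cI /= . lra. }
have F_2_4_2 : ent (phi (eN R 2%N) (eN R 4%N)) 2%N = ent (phi (eN R 4%N) (eN R 5%N)) 2%N / 4 * (cI 2 4 2)%:~R.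
{
  have E0 := sp_entry Hsp (a:=2%N) (b:=4%N) (c:=5%N) (r:=7%N) isT isT isT isT; rewrite /rho8F /= in E0.
  clear -E0.
  rewrite /cI /= . lra. }
have F_4_6_1 : ent (phi (eN R 4%N) (eN R 6%N)) 1%N = ent (phi (eN R 4%N) (eN R 5%N)) 2%N / 4 * (cI 4 6 1)%:~R.
{
  have E0 := sp_entry Hsp (a:=2%N) (b:=4%N) (c:=6%N) (r:=0%N) isT isT isT isT; rewrite /rho8F /= in E0.
  clear -E0.
  rewrite /cI /= . lra. }
have F_4_7_1 : ent (phi (eN R 4%N) (eN R 7%N)) 1%N = ent (phi (eN R 4%N) (eN R 5%N)) 2%N / 4 * (cI 4 7 1)%:~R.
{
  have E0 := sp_entry Hsp (a:=2%N) (b:=4%N) (c:=7%N) (r:=0%N) isT isT isT isT; rewrite /rho8F /= in E0.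
  clear -E0.
  rewrite /cI /= . lra. }
have F_5_6_1 : ent (phi (eN R 5%N) (eN R 6%N)) 1%N = ent (phi (eN R 4%N) (eN R 5%N)) 2%N / 4 * (cI 5 6 1)%:~R.
{
  have E0 := sp_entry Hsp (a:=2%N) (b:=5%N) (c:=6%N) (r:=0%N) isT isT isT isT; rewrite /rho8F /= in E0.
  clear -E0.
  rewrite /cI /= . lra. }
have F_2_6_5 : ent (phi (eN R 2%N) (eN R 6%N)) 5%N = ent (phi (eN R 4%N) (eN R 5%N)) 2%N / 4 * (cI 2 6 5)%:~R.
{
  have E0 := sp_entry Hsp (a:=2%N) (b:=5%N) (c:=6%N) (r:=4%N) isT isT isT isT; rewrite /rho8F /= in E0.
  clear -E0 F_5_6_2 F_2_5_1.
  rewrite /cI /= in F_5_6_2 F_2_5_1 *. lra. }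
have F_5_7_1 : ent (phi (eN R 5%N) (eN R 7%N)) 1%N = ent (phi (eN R 4%N) (eN R 5%N)) 2%N / 4 * (cI 5 7 1)%:~R.
{
  have E0 := sp_entry Hsp (a:=2%N) (b:=5%N) (c:=7%N) (r:=0%N) isT isT isT isT; rewrite /rho8F /= in E0.
  clear -E0.
  rewrite /cI /= . lra. }
have F_2_7_5 : ent (phi (eN R 2%N) (eN R 7%N)) 5%N = ent (phi (eN R 4%N) (eN R 5%N)) 2%N / 4 * (cI 2 7 5)%:~R.
{
  have E0 := sp_entry Hsp (a:=2%N) (b:=5%N) (c:=7%N) (r:=4%N) isT isT isT isT; rewrite /rho8F /= in E0.
  clear -E0 F_5_7_2.
  rewrite /cI /= in F_5_7_2 *. lra. }
have F_2_5_5 : ent (phi (eN R 2%N) (eN R 5%N)) 5%N = ent (phi (eN R 4%N) (eN R 5%N)) 2%N / 4 * (cI 2 5 5)%:~R.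
{
  have E0 := sp_entry Hsp (a:=2%N) (b:=5%N) (c:=7%N) (r:=6%N) isT isT isT isT; rewrite /rho8F /= in E0.
  clear -E0.
  rewrite /cI /= . lra. }
have F_6_7_1 : ent (phi (eN R 6%N) (eN R 7%N)) 1%N = ent (phi (eN R 4%N) (eN R 5%N)) 2%N / 4 * (cI 6 7 1)%:~R.
{
  have E0 := sp_entry Hsp (a:=2%N) (b:=6%N) (c:=7%N) (r:=0%N) isT isT isT isT; rewrite /rho8F /= in E0.
  clear -E0.
  rewrite /cI /= . lra. }
have F_3_5_2 : ent (phi (eN R 3%N) (eN R 5%N)) 2%N = ent (phi (eN R 4%N) (eN R 5%N)) 2%N / 4 * (cI 3 5 2)%:~R.
{
  have E0 := sp_entry Hsp (a:=3%N) (b:=4%N) (c:=5%N) (r:=6%N) isT isT isT isT; rewrite /rho8F /= in E0.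
  clear -E0.
  rewrite /cI /= . lra. }
have F_3_4_2 : ent (phi (eN R 3%N) (eN R 4%N)) 2%N = ent (phi (eN R 4%N) (eN R 5%N)) 2%N / 4 * (cI 3 4 2)%:~R.
{
  have E0 := sp_entry Hsp (a:=3%N) (b:=4%N) (c:=5%N) (r:=7%N) isT isT isT isT; rewrite /rho8F /= in E0.
  clear -E0.
  rewrite /cI /= . lra. }
have F_3_6_6 : ent (phi (eN R 3%N) (eN R 6%N)) 6%N = ent (phi (eN R 4%N) (eN R 5%N)) 2%N / 4 * (cI 3 6 6)%:~R.
{
  have E0 := sp_entry Hsp (a:=3%N) (b:=4%N) (c:=6%N) (r:=5%N) isT isT isT isT; rewrite /rho8F /= in E0.
  clear -E0 F_4_6_2.
  rewrite /cI /= in F_4_6_2 *. lra. }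
have F_3_4_6 : ent (phi (eN R 3%N) (eN R 4%N)) 6%N = ent (phi (eN R 4%N) (eN R 5%N)) 2%N / 4 * (cI 3 4 6)%:~R.
{
  have E0 := sp_entry Hsp (a:=3%N) (b:=4%N) (c:=6%N) (r:=7%N) isT isT isT isT; rewrite /rho8F /= in E0.
  clear -E0.
  rewrite /cI /= . lra. }
have F_3_7_6 : ent (phi (eN R 3%N) (eN R 7%N)) 6%N = ent (phi (eN R 4%N) (eN R 5%N)) 2%N / 4 * (cI 3 7 6)%:~R.
{
  have E0 := sp_entry Hsp (a:=3%N) (b:=4%N) (c:=7%N) (r:=5%N) isT isT isT isT; rewrite /rho8F /= in E0.
  clear -E0 F_4_7_2 F_3_4_1.
  rewrite /cI /= in F_4_7_2 F_3_4_1 *. lra. }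
have F_3_5_6 : ent (phi (eN R 3%N) (eN R 5%N)) 6%N = ent (phi (eN R 4%N) (eN R 5%N)) 2%N / 4 * (cI 3 5 6)%:~R.
{
  have E0 := sp_entry Hsp (a:=0%N) (b:=3%N) (c:=5%N) (r:=1%N) isT isT isT isT; rewrite /rho8F /= in E0.
  clear -E0 F_0_5_1.
  rewrite /cI /= in F_0_5_1 *. lra. }
have F_3_6_2 : ent (phi (eN R 3%N) (eN R 6%N)) 2%N = ent (phi (eN R 4%N) (eN R 5%N)) 2%N / 4 * (cI 3 6 2)%:~R.
{
  have E0 := sp_entry Hsp (a:=0%N) (b:=3%N) (c:=6%N) (r:=2%N) isT isT isT isT; rewrite /rho8F /= in E0.
  clear -E0 F_0_6_5.
  rewrite /cI /= in F_0_6_5 *. lra. }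
have F_2_4_5 : ent (phi (eN R 2%N) (eN R 4%N)) 5%N = ent (phi (eN R 4%N) (eN R 5%N)) 2%N / 4 * (cI 2 4 5)%:~R.
{
  have E0 := sp_entry Hsp (a:=1%N) (b:=2%N) (c:=4%N) (r:=0%N) isT isT isT isT; rewrite /rho8F /= in E0.
  clear -E0 F_1_4_1.
  rewrite /cI /= in F_1_4_1 *. lra. }
have F_2_7_2 : ent (phi (eN R 2%N) (eN R 7%N)) 2%N = ent (phi (eN R 4%N) (eN R 5%N)) 2%N / 4 * (cI 2 7 2)%:~R.
{
  have E0 := sp_entry Hsp (a:=1%N) (b:=2%N) (c:=7%N) (r:=3%N) isT isT isT isT; rewrite /rho8F /= in E0.
  clear -E0 F_1_7_6.
  rewrite /cI /= in F_1_7_6 *. lra. }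
have F_2_3_1 : ent (phi (eN R 2%N) (eN R 3%N)) 1%N = ent (phi (eN R 4%N) (eN R 5%N)) 2%N / 4 * (cI 2 3 1)%:~R.
{
  have E0 := sp_entry Hsp (a:=2%N) (b:=3%N) (c:=6%N) (r:=4%N) isT isT isT isT; rewrite /rho8F /= in E0.
  clear -E0 F_3_6_2.
  rewrite /cI /= in F_3_6_2 *. lra. }
have F_0_2_7 : ent (phi (eN R 0%N) (eN R 2%N)) 7%N = ent (phi (eN R 4%N) (eN R 5%N)) 2%N / 4 * (cI 0 2 7)%:~R.
{
  have E0 : ent (phi (eN R 0%N) (eN R 2%N)) 0%N + ent (phi (eN R 0%N) (eN R 2%N)) 3%N = 0 by rewrite -trace_ent; apply: Hin.
  have E1 := sp_entry Hsp (a:=0%N) (b:=1%N) (c:=2%N) (r:=1%N) isT isT isT isT; rewrite /rho8F /= in E1.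
  have E2 := sp_entry Hsp (a:=0%N) (b:=2%N) (c:=3%N) (r:=3%N) isT isT isT isT; rewrite /rho8F /= in E2.
  clear -E0 E1 E2 F_0_3_6 F_1_2_6.
  rewrite /cI /= in F_0_3_6 F_1_2_6 *. lra. }
have F_0_2_0 : ent (phi (eN R 0%N) (eN R 2%N)) 0%N = ent (phi (eN R 4%N) (eN R 5%N)) 2%N / 4 * (cI 0 2 0)%:~R.
{
  have E0 := sp_entry Hsp (a:=0%N) (b:=1%N) (c:=2%N) (r:=1%N) isT isT isT isT; rewrite /rho8F /= in E0.
  clear -E0 F_1_2_6 F_0_2_7.
  rewrite /cI /= in F_1_2_6 F_0_2_7 *. lra. }
have F_0_2_3 : ent (phi (eN R 0%N) (eN R 2%N)) 3%N = ent (phi (eN R 4%N) (eN R 5%N)) 2%N / 4 * (cI 0 2 3)%:~R.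
{
  have E0 := sp_entry Hsp (a:=0%N) (b:=2%N) (c:=3%N) (r:=3%N) isT isT isT isT; rewrite /rho8F /= in E0.
  clear -E0 F_0_3_6 F_0_2_0 F_0_2_7.
  rewrite /cI /= in F_0_3_6 F_0_2_0 F_0_2_7 *. lra. }
have F_0_2_4 : ent (phi (eN R 0%N) (eN R 2%N)) 4%N = ent (phi (eN R 4%N) (eN R 5%N)) 2%N / 4 * (cI 0 2 4)%:~R.
{
  have E0 := sp_entry Hsp (a:=0%N) (b:=2%N) (c:=4%N) (r:=4%N) isT isT isT isT; rewrite /rho8F /= in E0.
  clear -E0 F_0_4_2 F_0_2_0 F_0_2_3.
  rewrite /cI /= in F_0_4_2 F_0_2_0 F_0_2_3 *. lra. }
have F_0_4_7 : ent (phi (eN R 0%N) (eN R 4%N)) 7%N = ent (phi (eN R 4%N) (eN R 5%N)) 2%N / 4 * (cI 0 4 7)%:~R.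
{
  have E0 : ent (phi (eN R 0%N) (eN R 4%N)) 0%N + ent (phi (eN R 0%N) (eN R 4%N)) 3%N = 0 by rewrite -trace_ent; apply: Hin.
  have E1 := sp_entry Hsp (a:=0%N) (b:=1%N) (c:=4%N) (r:=1%N) isT isT isT isT; rewrite /rho8F /= in E1.
  have E2 := sp_entry Hsp (a:=0%N) (b:=3%N) (c:=4%N) (r:=3%N) isT isT isT isT; rewrite /rho8F /= in E2.
  clear -E0 E1 E2 F_1_4_6.
  rewrite /cI /= in F_1_4_6 *. lra. }
have F_0_4_0 : ent (phi (eN R 0%N) (eN R 4%N)) 0%N = ent (phi (eN R 4%N) (eN R 5%N)) 2%N / 4 * (cI 0 4 0)%:~R.
{
  have E0 := sp_entry Hsp (a:=0%N) (b:=1%N) (c:=4%N) (r:=1%N) isT isT isT isT; rewrite /rho8F /= in E0.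
  clear -E0 F_1_4_6 F_0_4_7.
  rewrite /cI /= in F_1_4_6 F_0_4_7 *. lra. }
have F_0_4_3 : ent (phi (eN R 0%N) (eN R 4%N)) 3%N = ent (phi (eN R 4%N) (eN R 5%N)) 2%N / 4 * (cI 0 4 3)%:~R.
{
  have E0 := sp_entry Hsp (a:=0%N) (b:=3%N) (c:=4%N) (r:=3%N) isT isT isT isT; rewrite /rho8F /= in E0.
  clear -E0 F_0_4_0 F_0_4_7.
  rewrite /cI /= in F_0_4_0 F_0_4_7 *. lra. }
have F_0_4_4 : ent (phi (eN R 0%N) (eN R 4%N)) 4%N = ent (phi (eN R 4%N) (eN R 5%N)) 2%N / 4 * (cI 0 4 4)%:~R.
{
  have E0 := sp_entry Hsp (a:=0%N) (b:=4%N) (c:=6%N) (r:=6%N) isT isT isT isT; rewrite /rho8F /= in E0.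
  clear -E0 F_0_6_2 F_0_4_3.
  rewrite /cI /= in F_0_6_2 F_0_4_3 *. lra. }
have F_0_5_7 : ent (phi (eN R 0%N) (eN R 5%N)) 7%N = ent (phi (eN R 4%N) (eN R 5%N)) 2%N / 4 * (cI 0 5 7)%:~R.
{
  have E0 : ent (phi (eN R 0%N) (eN R 5%N)) 0%N + ent (phi (eN R 0%N) (eN R 5%N)) 3%N = 0 by rewrite -trace_ent; apply: Hin.
  have E1 := sp_entry Hsp (a:=0%N) (b:=1%N) (c:=5%N) (r:=1%N) isT isT isT isT; rewrite /rho8F /= in E1.
  have E2 := sp_entry Hsp (a:=0%N) (b:=3%N) (c:=5%N) (r:=3%N) isT isT isT isT; rewrite /rho8F /= in E2.
  clear -E0 E1 E2 F_0_3_1 F_1_5_6.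
  rewrite /cI /= in F_0_3_1 F_1_5_6 *. lra. }
have F_0_5_0 : ent (phi (eN R 0%N) (eN R 5%N)) 0%N = ent (phi (eN R 4%N) (eN R 5%N)) 2%N / 4 * (cI 0 5 0)%:~R.
{
  have E0 := sp_entry Hsp (a:=0%N) (b:=1%N) (c:=5%N) (r:=1%N) isT isT isT isT; rewrite /rho8F /= in E0.
  clear -E0 F_1_5_6 F_0_5_7.
  rewrite /cI /= in F_1_5_6 F_0_5_7 *. lra. }
have F_0_5_3 : ent (phi (eN R 0%N) (eN R 5%N)) 3%N = ent (phi (eN R 4%N) (eN R 5%N)) 2%N / 4 * (cI 0 5 3)%:~R.
{
  have E0 := sp_entry Hsp (a:=0%N) (b:=3%N) (c:=5%N) (r:=3%N) isT isT isT isT; rewrite /rho8F /= in E0.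
  clear -E0 F_0_5_0 F_0_5_7 F_0_3_1.
  rewrite /cI /= in F_0_5_0 F_0_5_7 F_0_3_1 *. lra. }
have F_0_5_4 : ent (phi (eN R 0%N) (eN R 5%N)) 4%N = ent (phi (eN R 4%N) (eN R 5%N)) 2%N / 4 * (cI 0 5 4)%:~R.
{
  have E0 := sp_entry Hsp (a:=0%N) (b:=4%N) (c:=5%N) (r:=4%N) isT isT isT isT; rewrite /rho8F /= in E0.
  clear -E0 F_0_5_0 F_0_5_3 F_0_4_5.
  rewrite /cI /= in F_0_5_0 F_0_5_3 F_0_4_5 *. lra. }
have F_0_6_7 : ent (phi (eN R 0%N) (eN R 6%N)) 7%N = ent (phi (eN R 4%N) (eN R 5%N)) 2%N / 4 * (cI 0 6 7)%:~R.
{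
  have E0 : ent (phi (eN R 0%N) (eN R 6%N)) 0%N + ent (phi (eN R 0%N) (eN R 6%N)) 3%N = 0 by rewrite -trace_ent; apply: Hin.
  have E1 := sp_entry Hsp (a:=0%N) (b:=1%N) (c:=6%N) (r:=1%N) isT isT isT isT; rewrite /rho8F /= in E1.
  have E2 := sp_entry Hsp (a:=0%N) (b:=3%N) (c:=6%N) (r:=3%N) isT isT isT isT; rewrite /rho8F /= in E2.
  clear -E0 E1 E2 F_1_6_6.
  rewrite /cI /= in F_1_6_6 *. lra. }
have F_0_6_0 : ent (phi (eN R 0%N) (eN R 6%N)) 0%N = ent (phi (eN R 4%N) (eN R 5%N)) 2%N / 4 * (cI 0 6 0)%:~R.
{
  have E0 := sp_entry Hsp (a:=0%N) (b:=1%N) (c:=6%N) (r:=1%N) isT isT isT isT; rewrite /rho8F /= in E0.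
  clear -E0 F_1_6_6 F_0_6_7.
  rewrite /cI /= in F_1_6_6 F_0_6_7 *. lra. }
have F_0_6_3 : ent (phi (eN R 0%N) (eN R 6%N)) 3%N = ent (phi (eN R 4%N) (eN R 5%N)) 2%N / 4 * (cI 0 6 3)%:~R.
{
  have E0 := sp_entry Hsp (a:=0%N) (b:=3%N) (c:=6%N) (r:=3%N) isT isT isT isT; rewrite /rho8F /= in E0.
  clear -E0 F_0_6_0 F_0_6_7.
  rewrite /cI /= in F_0_6_0 F_0_6_7 *. lra. }
have F_0_6_4 : ent (phi (eN R 0%N) (eN R 6%N)) 4%N = ent (phi (eN R 4%N) (eN R 5%N)) 2%N / 4 * (cI 0 6 4)%:~R.
{
  have E0 := sp_entry Hsp (a:=0%N) (b:=4%N) (c:=6%N) (r:=4%N) isT isT isT isT; rewrite /rho8F /= in E0.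
  clear -E0 F_0_6_0 F_0_6_3 F_0_4_1.
  rewrite /cI /= in F_0_6_0 F_0_6_3 F_0_4_1 *. lra. }
have F_0_7_7 : ent (phi (eN R 0%N) (eN R 7%N)) 7%N = ent (phi (eN R 4%N) (eN R 5%N)) 2%N / 4 * (cI 0 7 7)%:~R.
{
  have E0 : ent (phi (eN R 0%N) (eN R 7%N)) 0%N + ent (phi (eN R 0%N) (eN R 7%N)) 3%N = 0 by rewrite -trace_ent; apply: Hin.
  have E1 := sp_entry Hsp (a:=0%N) (b:=1%N) (c:=7%N) (r:=1%N) isT isT isT isT; rewrite /rho8F /= in E1.
  have E2 := sp_entry Hsp (a:=0%N) (b:=3%N) (c:=7%N) (r:=3%N) isT isT isT isT; rewrite /rho8F /= in E2.
  clear -E0 E1 E2 F_1_7_6.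
  rewrite /cI /= in F_1_7_6 *. lra. }
have F_0_7_0 : ent (phi (eN R 0%N) (eN R 7%N)) 0%N = ent (phi (eN R 4%N) (eN R 5%N)) 2%N / 4 * (cI 0 7 0)%:~R.
{
  have E0 := sp_entry Hsp (a:=0%N) (b:=1%N) (c:=7%N) (r:=1%N) isT isT isT isT; rewrite /rho8F /= in E0.
  clear -E0 F_1_7_6 F_0_7_7.
  rewrite /cI /= in F_1_7_6 F_0_7_7 *. lra. }
have F_0_7_3 : ent (phi (eN R 0%N) (eN R 7%N)) 3%N = ent (phi (eN R 4%N) (eN R 5%N)) 2%N / 4 * (cI 0 7 3)%:~R.
{
  have E0 := sp_entry Hsp (a:=0%N) (b:=3%N) (c:=7%N) (r:=3%N) isT isT isT isT; rewrite /rho8F /= in E0.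
  clear -E0 F_0_7_0 F_0_7_7.
  rewrite /cI /= in F_0_7_0 F_0_7_7 *. lra. }
have F_0_7_4 : ent (phi (eN R 0%N) (eN R 7%N)) 4%N = ent (phi (eN R 4%N) (eN R 5%N)) 2%N / 4 * (cI 0 7 4)%:~R.
{
  have E0 := sp_entry Hsp (a:=0%N) (b:=4%N) (c:=7%N) (r:=4%N) isT isT isT isT; rewrite /rho8F /= in E0.
  clear -E0 F_0_7_0 F_0_7_3.
  rewrite /cI /= in F_0_7_0 F_0_7_3 *. lra. }
have F_1_3_4 : ent (phi (eN R 1%N) (eN R 3%N)) 4%N = ent (phi (eN R 4%N) (eN R 5%N)) 2%N / 4 * (cI 1 3 4)%:~R.
{
  have E0 : ent (phi (eN R 1%N) (eN R 3%N)) 0%N + ent (phi (eN R 1%N) (eN R 3%N)) 3%N = 0 by rewrite -trace_ent; apply: Hin.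
  have E1 := sp_entry Hsp (a:=0%N) (b:=1%N) (c:=3%N) (r:=0%N) isT isT isT isT; rewrite /rho8F /= in E1.
  have E2 := sp_entry Hsp (a:=1%N) (b:=2%N) (c:=3%N) (r:=2%N) isT isT isT isT; rewrite /rho8F /= in E2.
  clear -E0 E1 E2 F_0_3_5 F_1_2_5.
  rewrite /cI /= in F_0_3_5 F_1_2_5 *. lra. }
have F_1_3_0 : ent (phi (eN R 1%N) (eN R 3%N)) 0%N = ent (phi (eN R 4%N) (eN R 5%N)) 2%N / 4 * (cI 1 3 0)%:~R.
{
  have E0 := sp_entry Hsp (a:=0%N) (b:=1%N) (c:=3%N) (r:=0%N) isT isT isT isT; rewrite /rho8F /= in E0.
  clear -E0 F_1_3_4 F_0_3_5.
  rewrite /cI /= in F_1_3_4 F_0_3_5 *. lra. }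
have F_1_3_3 : ent (phi (eN R 1%N) (eN R 3%N)) 3%N = ent (phi (eN R 4%N) (eN R 5%N)) 2%N / 4 * (cI 1 3 3)%:~R.
{
  have E0 := sp_entry Hsp (a:=1%N) (b:=2%N) (c:=3%N) (r:=2%N) isT isT isT isT; rewrite /rho8F /= in E0.
  clear -E0 F_1_3_0 F_1_3_4 F_1_2_5.
  rewrite /cI /= in F_1_3_0 F_1_3_4 F_1_2_5 *. lra. }
have F_1_3_7 : ent (phi (eN R 1%N) (eN R 3%N)) 7%N = ent (phi (eN R 4%N) (eN R 5%N)) 2%N / 4 * (cI 1 3 7)%:~R.
{
  have E0 := sp_entry Hsp (a:=1%N) (b:=3%N) (c:=5%N) (r:=5%N) isT isT isT isT; rewrite /rho8F /= in E0.
  clear -E0 F_1_5_2 F_1_3_0 F_1_3_3.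
  rewrite /cI /= in F_1_5_2 F_1_3_0 F_1_3_3 *. lra. }
have F_1_4_4 : ent (phi (eN R 1%N) (eN R 4%N)) 4%N = ent (phi (eN R 4%N) (eN R 5%N)) 2%N / 4 * (cI 1 4 4)%:~R.
{
  have E0 : ent (phi (eN R 1%N) (eN R 4%N)) 0%N + ent (phi (eN R 1%N) (eN R 4%N)) 3%N = 0 by rewrite -trace_ent; apply: Hin.
  have E1 := sp_entry Hsp (a:=0%N) (b:=1%N) (c:=4%N) (r:=0%N) isT isT isT isT; rewrite /rho8F /= in E1.
  have E2 := sp_entry Hsp (a:=1%N) (b:=2%N) (c:=4%N) (r:=2%N) isT isT isT isT; rewrite /rho8F /= in E2.
  clear -E0 E1 E2 F_0_4_5 F_1_2_1.
  rewrite /cI /= in F_0_4_5 F_1_2_1 *. lra. }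
have F_1_4_0 : ent (phi (eN R 1%N) (eN R 4%N)) 0%N = ent (phi (eN R 4%N) (eN R 5%N)) 2%N / 4 * (cI 1 4 0)%:~R.
{
  have E0 := sp_entry Hsp (a:=0%N) (b:=1%N) (c:=4%N) (r:=0%N) isT isT isT isT; rewrite /rho8F /= in E0.
  clear -E0 F_1_4_4 F_0_4_5.
  rewrite /cI /= in F_1_4_4 F_0_4_5 *. lra. }
have F_1_4_3 : ent (phi (eN R 1%N) (eN R 4%N)) 3%N = ent (phi (eN R 4%N) (eN R 5%N)) 2%N / 4 * (cI 1 4 3)%:~R.
{
  have E0 := sp_entry Hsp (a:=1%N) (b:=2%N) (c:=4%N) (r:=2%N) isT isT isT isT; rewrite /rho8F /= in E0.
  clear -E0 F_1_4_0 F_1_4_4 F_1_2_1.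
  rewrite /cI /= in F_1_4_0 F_1_4_4 F_1_2_1 *. lra. }
have F_1_4_7 : ent (phi (eN R 1%N) (eN R 4%N)) 7%N = ent (phi (eN R 4%N) (eN R 5%N)) 2%N / 4 * (cI 1 4 7)%:~R.
{
  have E0 := sp_entry Hsp (a:=1%N) (b:=3%N) (c:=4%N) (r:=3%N) isT isT isT isT; rewrite /rho8F /= in E0.
  clear -E0 F_3_4_2 F_1_4_0 F_1_4_3.
  rewrite /cI /= in F_3_4_2 F_1_4_0 F_1_4_3 *. lra. }
have F_1_5_4 : ent (phi (eN R 1%N) (eN R 5%N)) 4%N = ent (phi (eN R 4%N) (eN R 5%N)) 2%N / 4 * (cI 1 5 4)%:~R.
{
  have E0 : ent (phi (eN R 1%N) (eN R 5%N)) 0%N + ent (phi (eN R 1%N) (eN R 5%N)) 3%N = 0 by rewrite -trace_ent; apply: Hin.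
  have E1 := sp_entry Hsp (a:=0%N) (b:=1%N) (c:=5%N) (r:=0%N) isT isT isT isT; rewrite /rho8F /= in E1.
  have E2 := sp_entry Hsp (a:=1%N) (b:=2%N) (c:=5%N) (r:=2%N) isT isT isT isT; rewrite /rho8F /= in E2.
  clear -E0 E1 E2 F_0_5_5.
  rewrite /cI /= in F_0_5_5 *. lra. }
have F_1_5_0 : ent (phi (eN R 1%N) (eN R 5%N)) 0%N = ent (phi (eN R 4%N) (eN R 5%N)) 2%N / 4 * (cI 1 5 0)%:~R.
{
  have E0 := sp_entry Hsp (a:=0%N) (b:=1%N) (c:=5%N) (r:=0%N) isT isT isT isT; rewrite /rho8F /= in E0.
  clear -E0 F_1_5_4 F_0_5_5.
  rewrite /cI /= in F_1_5_4 F_0_5_5 *. lra. }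
have F_1_5_3 : ent (phi (eN R 1%N) (eN R 5%N)) 3%N = ent (phi (eN R 4%N) (eN R 5%N)) 2%N / 4 * (cI 1 5 3)%:~R.
{
  have E0 := sp_entry Hsp (a:=1%N) (b:=2%N) (c:=5%N) (r:=2%N) isT isT isT isT; rewrite /rho8F /= in E0.
  clear -E0 F_1_5_0 F_1_5_4.
  rewrite /cI /= in F_1_5_0 F_1_5_4 *. lra. }
have F_1_5_7 : ent (phi (eN R 1%N) (eN R 5%N)) 7%N = ent (phi (eN R 4%N) (eN R 5%N)) 2%N / 4 * (cI 1 5 7)%:~R.
{
  have E0 := sp_entry Hsp (a:=1%N) (b:=3%N) (c:=5%N) (r:=3%N) isT isT isT isT; rewrite /rho8F /= in E0.
  clear -E0 F_3_5_2 F_1_5_0 F_1_5_3 F_1_3_1.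
  rewrite /cI /= in F_3_5_2 F_1_5_0 F_1_5_3 F_1_3_1 *. lra. }
have F_1_6_4 : ent (phi (eN R 1%N) (eN R 6%N)) 4%N = ent (phi (eN R 4%N) (eN R 5%N)) 2%N / 4 * (cI 1 6 4)%:~R.
{
  have E0 : ent (phi (eN R 1%N) (eN R 6%N)) 0%N + ent (phi (eN R 1%N) (eN R 6%N)) 3%N = 0 by rewrite -trace_ent; apply: Hin.
  have E1 := sp_entry Hsp (a:=0%N) (b:=1%N) (c:=6%N) (r:=0%N) isT isT isT isT; rewrite /rho8F /= in E1.
  have E2 := sp_entry Hsp (a:=1%N) (b:=2%N) (c:=6%N) (r:=2%N) isT isT isT isT; rewrite /rho8F /= in E2.
  clear -E0 E1 E2 F_0_6_5.
  rewrite /cI /= in F_0_6_5 *. lra. }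
have F_1_6_0 : ent (phi (eN R 1%N) (eN R 6%N)) 0%N = ent (phi (eN R 4%N) (eN R 5%N)) 2%N / 4 * (cI 1 6 0)%:~R.
{
  have E0 := sp_entry Hsp (a:=0%N) (b:=1%N) (c:=6%N) (r:=0%N) isT isT isT isT; rewrite /rho8F /= in E0.
  clear -E0 F_1_6_4 F_0_6_5.
  rewrite /cI /= in F_1_6_4 F_0_6_5 *. lra. }
have F_1_6_3 : ent (phi (eN R 1%N) (eN R 6%N)) 3%N = ent (phi (eN R 4%N) (eN R 5%N)) 2%N / 4 * (cI 1 6 3)%:~R.
{
  have E0 := sp_entry Hsp (a:=1%N) (b:=2%N) (c:=6%N) (r:=2%N) isT isT isT isT; rewrite /rho8F /= in E0.
  clear -E0 F_1_6_0 F_1_6_4.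
  rewrite /cI /= in F_1_6_0 F_1_6_4 *. lra. }
have F_1_6_7 : ent (phi (eN R 1%N) (eN R 6%N)) 7%N = ent (phi (eN R 4%N) (eN R 5%N)) 2%N / 4 * (cI 1 6 7)%:~R.
{
  have E0 := sp_entry Hsp (a:=1%N) (b:=3%N) (c:=6%N) (r:=3%N) isT isT isT isT; rewrite /rho8F /= in E0.
  clear -E0 F_3_6_2 F_1_6_0 F_1_6_3.
  rewrite /cI /= in F_3_6_2 F_1_6_0 F_1_6_3 *. lra. }
have F_1_7_4 : ent (phi (eN R 1%N) (eN R 7%N)) 4%N = ent (phi (eN R 4%N) (eN R 5%N)) 2%N / 4 * (cI 1 7 4)%:~R.
{
  have E0 : ent (phi (eN R 1%N) (eN R 7%N)) 0%N + ent (phi (eN R 1%N) (eN R 7%N)) 3%N = 0 by rewrite -trace_ent; apply: Hin.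
  have E1 := sp_entry Hsp (a:=0%N) (b:=1%N) (c:=7%N) (r:=0%N) isT isT isT isT; rewrite /rho8F /= in E1.
  have E2 := sp_entry Hsp (a:=1%N) (b:=2%N) (c:=7%N) (r:=2%N) isT isT isT isT; rewrite /rho8F /= in E2.
  clear -E0 E1 E2 F_0_7_5.
  rewrite /cI /= in F_0_7_5 *. lra. }
have F_1_7_0 : ent (phi (eN R 1%N) (eN R 7%N)) 0%N = ent (phi (eN R 4%N) (eN R 5%N)) 2%N / 4 * (cI 1 7 0)%:~R.
{
  have E0 := sp_entry Hsp (a:=0%N) (b:=1%N) (c:=7%N) (r:=0%N) isT isT isT isT; rewrite /rho8F /= in E0.
  clear -E0 F_1_7_4 F_0_7_5.
  rewrite /cI /= in F_1_7_4 F_0_7_5 *. lra. }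
have F_1_7_3 : ent (phi (eN R 1%N) (eN R 7%N)) 3%N = ent (phi (eN R 4%N) (eN R 5%N)) 2%N / 4 * (cI 1 7 3)%:~R.
{
  have E0 := sp_entry Hsp (a:=1%N) (b:=2%N) (c:=7%N) (r:=2%N) isT isT isT isT; rewrite /rho8F /= in E0.
  clear -E0 F_1_7_0 F_1_7_4.
  rewrite /cI /= in F_1_7_0 F_1_7_4 *. lra. }
have F_1_7_7 : ent (phi (eN R 1%N) (eN R 7%N)) 7%N = ent (phi (eN R 4%N) (eN R 5%N)) 2%N / 4 * (cI 1 7 7)%:~R.
{
  have E0 := sp_entry Hsp (a:=1%N) (b:=3%N) (c:=7%N) (r:=3%N) isT isT isT isT; rewrite /rho8F /= in E0.
  clear -E0 F_3_7_2 F_1_7_0 F_1_7_3.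
  rewrite /cI /= in F_3_7_2 F_1_7_0 F_1_7_3 *. lra. }
have F_0_1_7 : ent (phi (eN R 0%N) (eN R 1%N)) 7%N = ent (phi (eN R 4%N) (eN R 5%N)) 2%N / 4 * (cI 0 1 7)%:~R.
{
  have E0 : ent (phi (eN R 0%N) (eN R 1%N)) 0%N + ent (phi (eN R 0%N) (eN R 1%N)) 3%N = 0 by rewrite -trace_ent; apply: Hin.
  have E1 := sp_entry Hsp (a:=0%N) (b:=1%N) (c:=2%N) (r:=2%N) isT isT isT isT; rewrite /rho8F /= in E1.
  have E2 := sp_entry Hsp (a:=0%N) (b:=1%N) (c:=3%N) (r:=3%N) isT isT isT isT; rewrite /rho8F /= in E2.
  have E3 := sp_entry Hsp (a:=0%N) (b:=1%N) (c:=4%N) (r:=4%N) isT isT isT isT; rewrite /rho8F /= in E3.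
  clear -E0 E1 E2 E3 F_0_3_2 F_1_2_2.
  rewrite /cI /= in F_0_3_2 F_1_2_2 *. lra. }
have F_0_1_3 : ent (phi (eN R 0%N) (eN R 1%N)) 3%N = ent (phi (eN R 4%N) (eN R 5%N)) 2%N / 4 * (cI 0 1 3)%:~R.
{
  have E0 := sp_entry Hsp (a:=0%N) (b:=1%N) (c:=7%N) (r:=7%N) isT isT isT isT; rewrite /rho8F /= in E0.
  clear -E0 F_0_1_7.
  rewrite /cI /= in F_0_1_7 *. lra. }
have F_0_1_0 : ent (phi (eN R 0%N) (eN R 1%N)) 0%N = ent (phi (eN R 4%N) (eN R 5%N)) 2%N / 4 * (cI 0 1 0)%:~R.
{
  have E0 : ent (phi (eN R 0%N) (eN R 1%N)) 0%N + ent (phi (eN R 0%N) (eN R 1%N)) 3%N = 0 by rewrite -trace_ent; apply: Hin.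
  clear -E0 F_0_1_3.
  rewrite /cI /= in F_0_1_3 *. lra. }
have F_0_1_4 : ent (phi (eN R 0%N) (eN R 1%N)) 4%N = ent (phi (eN R 4%N) (eN R 5%N)) 2%N / 4 * (cI 0 1 4)%:~R.
{
  have E0 := sp_entry Hsp (a:=0%N) (b:=1%N) (c:=2%N) (r:=2%N) isT isT isT isT; rewrite /rho8F /= in E0.
  clear -E0 F_1_2_2 F_0_1_0 F_0_1_3.
  rewrite /cI /= in F_1_2_2 F_0_1_0 F_0_1_3 *. lra. }
have F_0_3_7 : ent (phi (eN R 0%N) (eN R 3%N)) 7%N = ent (phi (eN R 4%N) (eN R 5%N)) 2%N / 4 * (cI 0 3 7)%:~R.
{
  have E0 : ent (phi (eN R 0%N) (eN R 3%N)) 0%N + ent (phi (eN R 0%N) (eN R 3%N)) 3%N = 0 by rewrite -trace_ent; apply: Hin.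
  have E1 := sp_entry Hsp (a:=0%N) (b:=1%N) (c:=3%N) (r:=1%N) isT isT isT isT; rewrite /rho8F /= in E1.
  have E2 := sp_entry Hsp (a:=0%N) (b:=2%N) (c:=3%N) (r:=2%N) isT isT isT isT; rewrite /rho8F /= in E2.
  have E3 := sp_entry Hsp (a:=0%N) (b:=3%N) (c:=4%N) (r:=4%N) isT isT isT isT; rewrite /rho8F /= in E3.
  clear -E0 E1 E2 E3 F_0_1_1 F_0_2_5 F_1_3_6 F_2_3_2.
  rewrite /cI /= in F_0_1_1 F_0_2_5 F_1_3_6 F_2_3_2 *. lra. }
have F_0_3_0 : ent (phi (eN R 0%N) (eN R 3%N)) 0%N = ent (phi (eN R 4%N) (eN R 5%N)) 2%N / 4 * (cI 0 3 0)%:~R.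
{
  have E0 := sp_entry Hsp (a:=0%N) (b:=1%N) (c:=3%N) (r:=1%N) isT isT isT isT; rewrite /rho8F /= in E0.
  clear -E0 F_1_3_6 F_0_3_7 F_0_1_1.
  rewrite /cI /= in F_1_3_6 F_0_3_7 F_0_1_1 *. lra. }
have F_0_3_3 : ent (phi (eN R 0%N) (eN R 3%N)) 3%N = ent (phi (eN R 4%N) (eN R 5%N)) 2%N / 4 * (cI 0 3 3)%:~R.
{
  have E0 := sp_entry Hsp (a:=0%N) (b:=3%N) (c:=5%N) (r:=5%N) isT isT isT isT; rewrite /rho8F /= in E0.
  clear -E0 F_0_5_2 F_0_3_0 F_0_3_7.
  rewrite /cI /= in F_0_5_2 F_0_3_0 F_0_3_7 *. lra. }
have F_0_3_4 : ent (phi (eN R 0%N) (eN R 3%N)) 4%N = ent (phi (eN R 4%N) (eN R 5%N)) 2%N / 4 * (cI 0 3 4)%:~R.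
{
  have E0 := sp_entry Hsp (a:=0%N) (b:=3%N) (c:=6%N) (r:=6%N) isT isT isT isT; rewrite /rho8F /= in E0.
  clear -E0 F_0_3_3.
  rewrite /cI /= in F_0_3_3 *. lra. }
have F_1_2_7 : ent (phi (eN R 1%N) (eN R 2%N)) 7%N = ent (phi (eN R 4%N) (eN R 5%N)) 2%N / 4 * (cI 1 2 7)%:~R.
{
  have E0 : ent (phi (eN R 1%N) (eN R 2%N)) 0%N + ent (phi (eN R 1%N) (eN R 2%N)) 3%N = 0 by rewrite -trace_ent; apply: Hin.
  have E1 := sp_entry Hsp (a:=0%N) (b:=1%N) (c:=2%N) (r:=0%N) isT isT isT isT; rewrite /rho8F /= in E1.
  have E2 := sp_entry Hsp (a:=1%N) (b:=2%N) (c:=3%N) (r:=3%N) isT isT isT isT; rewrite /rho8F /= in E2.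
  have E3 := sp_entry Hsp (a:=1%N) (b:=2%N) (c:=4%N) (r:=4%N) isT isT isT isT; rewrite /rho8F /= in E3.
  clear -E0 E1 E2 E3 F_0_1_1 F_0_2_5 F_1_3_6 F_1_4_2 F_2_3_2.
  rewrite /cI /= in F_0_1_1 F_0_2_5 F_1_3_6 F_1_4_2 F_2_3_2 *. lra. }
have F_1_2_3 : ent (phi (eN R 1%N) (eN R 2%N)) 3%N = ent (phi (eN R 4%N) (eN R 5%N)) 2%N / 4 * (cI 1 2 3)%:~R.
{
  have E0 := sp_entry Hsp (a:=1%N) (b:=2%N) (c:=7%N) (r:=7%N) isT isT isT isT; rewrite /rho8F /= in E0.
  clear -E0 F_1_2_7.
  rewrite /cI /= in F_1_2_7 *. lra. }
have F_1_2_0 : ent (phi (eN R 1%N) (eN R 2%N)) 0%N = ent (phi (eN R 4%N) (eN R 5%N)) 2%N / 4 * (cI 1 2 0)%:~R.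
{
  have E0 : ent (phi (eN R 1%N) (eN R 2%N)) 0%N + ent (phi (eN R 1%N) (eN R 2%N)) 3%N = 0 by rewrite -trace_ent; apply: Hin.
  clear -E0 F_1_2_3.
  rewrite /cI /= in F_1_2_3 *. lra. }
have F_1_2_4 : ent (phi (eN R 1%N) (eN R 2%N)) 4%N = ent (phi (eN R 4%N) (eN R 5%N)) 2%N / 4 * (cI 1 2 4)%:~R.
{
  have E0 := sp_entry Hsp (a:=0%N) (b:=1%N) (c:=2%N) (r:=0%N) isT isT isT isT; rewrite /rho8F /= in E0.
  clear -E0 F_1_2_0 F_0_2_5 F_0_1_1.
  rewrite /cI /= in F_1_2_0 F_0_2_5 F_0_1_1 *. lra. }
have F_3_4_7 : ent (phi (eN R 3%N) (eN R 4%N)) 7%N = ent (phi (eN R 4%N) (eN R 5%N)) 2%N / 4 * (cI 3 4 7)%:~R.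
{
  have E0 : ent (phi (eN R 3%N) (eN R 4%N)) 0%N + ent (phi (eN R 3%N) (eN R 4%N)) 3%N = 0 by rewrite -trace_ent; apply: Hin.
  have E1 := sp_entry Hsp (a:=0%N) (b:=3%N) (c:=4%N) (r:=0%N) isT isT isT isT; rewrite /rho8F /= in E1.
  have E2 := sp_entry Hsp (a:=1%N) (b:=3%N) (c:=4%N) (r:=1%N) isT isT isT isT; rewrite /rho8F /= in E2.
  have E3 := sp_entry Hsp (a:=2%N) (b:=3%N) (c:=4%N) (r:=2%N) isT isT isT isT; rewrite /rho8F /= in E3.
  clear -E0 E1 E2 E3 F_1_4_1 F_2_3_1 F_2_4_5.
  rewrite /cI /= in F_1_4_1 F_2_3_1 F_2_4_5 *. lra. }
have F_3_4_0 : ent (phi (eN R 3%N) (eN R 4%N)) 0%N = ent (phi (eN R 4%N) (eN R 5%N)) 2%N / 4 * (cI 3 4 0)%:~R.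
{
  have E0 := sp_entry Hsp (a:=1%N) (b:=3%N) (c:=4%N) (r:=1%N) isT isT isT isT; rewrite /rho8F /= in E0.
  clear -E0 F_3_4_7 F_1_4_1.
  rewrite /cI /= in F_3_4_7 F_1_4_1 *. lra. }
have F_3_4_3 : ent (phi (eN R 3%N) (eN R 4%N)) 3%N = ent (phi (eN R 4%N) (eN R 5%N)) 2%N / 4 * (cI 3 4 3)%:~R.
{
  have E0 := sp_entry Hsp (a:=3%N) (b:=4%N) (c:=5%N) (r:=5%N) isT isT isT isT; rewrite /rho8F /= in E0.
  clear -E0 F_3_5_6 F_3_4_0 F_3_4_7.
  rewrite /cI /= in F_3_5_6 F_3_4_0 F_3_4_7 *. lra. }
have F_3_4_4 : ent (phi (eN R 3%N) (eN R 4%N)) 4%N = ent (phi (eN R 4%N) (eN R 5%N)) 2%N / 4 * (cI 3 4 4)%:~R.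
{
  have E0 := sp_entry Hsp (a:=3%N) (b:=4%N) (c:=6%N) (r:=6%N) isT isT isT isT; rewrite /rho8F /= in E0.
  clear -E0 F_3_6_2 F_3_4_3.
  rewrite /cI /= in F_3_6_2 F_3_4_3 *. lra. }
have F_2_4_7 : ent (phi (eN R 2%N) (eN R 4%N)) 7%N = ent (phi (eN R 4%N) (eN R 5%N)) 2%N / 4 * (cI 2 4 7)%:~R.
{
  have E0 : ent (phi (eN R 2%N) (eN R 4%N)) 0%N + ent (phi (eN R 2%N) (eN R 4%N)) 3%N = 0 by rewrite -trace_ent; apply: Hin.
  have E1 := sp_entry Hsp (a:=0%N) (b:=2%N) (c:=4%N) (r:=0%N) isT isT isT isT; rewrite /rho8F /= in E1.
  have E2 := sp_entry Hsp (a:=1%N) (b:=2%N) (c:=4%N) (r:=1%N) isT isT isT isT; rewrite /rho8F /= in E2.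
  have E3 := sp_entry Hsp (a:=2%N) (b:=3%N) (c:=4%N) (r:=3%N) isT isT isT isT; rewrite /rho8F /= in E3.
  clear -E0 E1 E2 E3 F_0_4_1 F_3_4_6.
  rewrite /cI /= in F_0_4_1 F_3_4_6 *. lra. }
have F_2_4_0 : ent (phi (eN R 2%N) (eN R 4%N)) 0%N = ent (phi (eN R 4%N) (eN R 5%N)) 2%N / 4 * (cI 2 4 0)%:~R.
{
  have E0 := sp_entry Hsp (a:=1%N) (b:=2%N) (c:=4%N) (r:=1%N) isT isT isT isT; rewrite /rho8F /= in E0.
  clear -E0 F_2_4_7.
  rewrite /cI /= in F_2_4_7 *. lra. }
have F_2_4_3 : ent (phi (eN R 2%N) (eN R 4%N)) 3%N = ent (phi (eN R 4%N) (eN R 5%N)) 2%N / 4 * (cI 2 4 3)%:~R.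
{
  have E0 := sp_entry Hsp (a:=2%N) (b:=3%N) (c:=4%N) (r:=3%N) isT isT isT isT; rewrite /rho8F /= in E0.
  clear -E0 F_3_4_6 F_2_4_0 F_2_4_7.
  rewrite /cI /= in F_3_4_6 F_2_4_0 F_2_4_7 *. lra. }
have F_2_4_4 : ent (phi (eN R 2%N) (eN R 4%N)) 4%N = ent (phi (eN R 4%N) (eN R 5%N)) 2%N / 4 * (cI 2 4 4)%:~R.
{
  have E0 := sp_entry Hsp (a:=2%N) (b:=4%N) (c:=6%N) (r:=6%N) isT isT isT isT; rewrite /rho8F /= in E0.
  clear -E0 F_2_6_2 F_2_4_3.
  rewrite /cI /= in F_2_6_2 F_2_4_3 *. lra. }
have F_2_3_7 : ent (phi (eN R 2%N) (eN R 3%N)) 7%N = ent (phi (eN R 4%N) (eN R 5%N)) 2%N / 4 * (cI 2 3 7)%:~R.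
{
  have E0 : ent (phi (eN R 2%N) (eN R 3%N)) 0%N + ent (phi (eN R 2%N) (eN R 3%N)) 3%N = 0 by rewrite -trace_ent; apply: Hin.
  have E1 := sp_entry Hsp (a:=0%N) (b:=2%N) (c:=3%N) (r:=0%N) isT isT isT isT; rewrite /rho8F /= in E1.
  have E2 := sp_entry Hsp (a:=1%N) (b:=2%N) (c:=3%N) (r:=1%N) isT isT isT isT; rewrite /rho8F /= in E2.
  have E3 := sp_entry Hsp (a:=2%N) (b:=3%N) (c:=4%N) (r:=4%N) isT isT isT isT; rewrite /rho8F /= in E3.
  clear -E0 E1 E2 E3 F_0_3_1 F_1_2_1 F_3_4_2.
  rewrite /cI /= in F_0_3_1 F_1_2_1 F_3_4_2 *. lra. }
have F_2_3_0 : ent (phi (eN R 2%N) (eN R 3%N)) 0%N = ent (phi (eN R 4%N) (eN R 5%N)) 2%N / 4 * (cI 2 3 0)%:~R.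
{
  have E0 := sp_entry Hsp (a:=1%N) (b:=2%N) (c:=3%N) (r:=1%N) isT isT isT isT; rewrite /rho8F /= in E0.
  clear -E0 F_2_3_7 F_1_2_1.
  rewrite /cI /= in F_2_3_7 F_1_2_1 *. lra. }
have F_2_3_3 : ent (phi (eN R 2%N) (eN R 3%N)) 3%N = ent (phi (eN R 4%N) (eN R 5%N)) 2%N / 4 * (cI 2 3 3)%:~R.
{
  have E0 := sp_entry Hsp (a:=2%N) (b:=3%N) (c:=5%N) (r:=5%N) isT isT isT isT; rewrite /rho8F /= in E0.
  clear -E0 F_2_5_2 F_2_3_0 F_2_3_7.
  rewrite /cI /= in F_2_5_2 F_2_3_0 F_2_3_7 *. lra. }
have F_2_3_4 : ent (phi (eN R 2%N) (eN R 3%N)) 4%N = ent (phi (eN R 4%N) (eN R 5%N)) 2%N / 4 * (cI 2 3 4)%:~R.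
{
  have E0 := sp_entry Hsp (a:=2%N) (b:=3%N) (c:=6%N) (r:=6%N) isT isT isT isT; rewrite /rho8F /= in E0.
  clear -E0 F_2_3_3.
  rewrite /cI /= in F_2_3_3 *. lra. }
have F_3_5_7 : ent (phi (eN R 3%N) (eN R 5%N)) 7%N = ent (phi (eN R 4%N) (eN R 5%N)) 2%N / 4 * (cI 3 5 7)%:~R.
{
  have E0 : ent (phi (eN R 3%N) (eN R 5%N)) 0%N + ent (phi (eN R 3%N) (eN R 5%N)) 3%N = 0 by rewrite -trace_ent; apply: Hin.
  have E1 := sp_entry Hsp (a:=0%N) (b:=3%N) (c:=5%N) (r:=0%N) isT isT isT isT; rewrite /rho8F /= in E1.
  have E2 := sp_entry Hsp (a:=1%N) (b:=3%N) (c:=5%N) (r:=1%N) isT isT isT isT; rewrite /rho8F /= in E2.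
  have E3 := sp_entry Hsp (a:=2%N) (b:=3%N) (c:=5%N) (r:=2%N) isT isT isT isT; rewrite /rho8F /= in E3.
  clear -E0 E1 E2 E3 F_1_5_1 F_2_5_5.
  rewrite /cI /= in F_1_5_1 F_2_5_5 *. lra. }
have F_3_5_0 : ent (phi (eN R 3%N) (eN R 5%N)) 0%N = ent (phi (eN R 4%N) (eN R 5%N)) 2%N / 4 * (cI 3 5 0)%:~R.
{
  have E0 := sp_entry Hsp (a:=1%N) (b:=3%N) (c:=5%N) (r:=1%N) isT isT isT isT; rewrite /rho8F /= in E0.
  clear -E0 F_3_5_7 F_1_5_1.
  rewrite /cI /= in F_3_5_7 F_1_5_1 *. lra. }
have F_3_5_3 : ent (phi (eN R 3%N) (eN R 5%N)) 3%N = ent (phi (eN R 4%N) (eN R 5%N)) 2%N / 4 * (cI 3 5 3)%:~R.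
{
  have E0 := sp_entry Hsp (a:=3%N) (b:=5%N) (c:=7%N) (r:=7%N) isT isT isT isT; rewrite /rho8F /= in E0.
  clear -E0 F_3_7_2 F_3_5_7.
  rewrite /cI /= in F_3_7_2 F_3_5_7 *. lra. }
have F_3_5_4 : ent (phi (eN R 3%N) (eN R 5%N)) 4%N = ent (phi (eN R 4%N) (eN R 5%N)) 2%N / 4 * (cI 3 5 4)%:~R.
{
  have E0 := sp_entry Hsp (a:=0%N) (b:=3%N) (c:=5%N) (r:=0%N) isT isT isT isT; rewrite /rho8F /= in E0.
  clear -E0 F_3_5_0.
  rewrite /cI /= in F_3_5_0 *. lra. }
have F_2_5_7 : ent (phi (eN R 2%N) (eN R 5%N)) 7%N = ent (phi (eN R 4%N) (eN R 5%N)) 2%N / 4 * (cI 2 5 7)%:~R.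
{
  have E0 : ent (phi (eN R 2%N) (eN R 5%N)) 0%N + ent (phi (eN R 2%N) (eN R 5%N)) 3%N = 0 by rewrite -trace_ent; apply: Hin.
  have E1 := sp_entry Hsp (a:=0%N) (b:=2%N) (c:=5%N) (r:=0%N) isT isT isT isT; rewrite /rho8F /= in E1.
  have E2 := sp_entry Hsp (a:=1%N) (b:=2%N) (c:=5%N) (r:=1%N) isT isT isT isT; rewrite /rho8F /= in E2.
  have E3 := sp_entry Hsp (a:=2%N) (b:=3%N) (c:=5%N) (r:=3%N) isT isT isT isT; rewrite /rho8F /= in E3.
  clear -E0 E1 E2 E3 F_0_5_1 F_2_3_1 F_3_5_6.
  rewrite /cI /= in F_0_5_1 F_2_3_1 F_3_5_6 *. lra. }
have F_2_5_0 : ent (phi (eN R 2%N) (eN R 5%N)) 0%N = ent (phi (eN R 4%N) (eN R 5%N)) 2%N / 4 * (cI 2 5 0)%:~R.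
{
  have E0 := sp_entry Hsp (a:=1%N) (b:=2%N) (c:=5%N) (r:=1%N) isT isT isT isT; rewrite /rho8F /= in E0.
  clear -E0 F_2_5_7.
  rewrite /cI /= in F_2_5_7 *. lra. }
have F_2_5_3 : ent (phi (eN R 2%N) (eN R 5%N)) 3%N = ent (phi (eN R 4%N) (eN R 5%N)) 2%N / 4 * (cI 2 5 3)%:~R.
{
  have E0 := sp_entry Hsp (a:=2%N) (b:=3%N) (c:=5%N) (r:=3%N) isT isT isT isT; rewrite /rho8F /= in E0.
  clear -E0 F_3_5_6 F_2_5_0 F_2_5_7 F_2_3_1.
  rewrite /cI /= in F_3_5_6 F_2_5_0 F_2_5_7 F_2_3_1 *. lra. }
have F_2_5_4 : ent (phi (eN R 2%N) (eN R 5%N)) 4%N = ent (phi (eN R 4%N) (eN R 5%N)) 2%N / 4 * (cI 2 5 4)%:~R.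
{
  have E0 := sp_entry Hsp (a:=2%N) (b:=4%N) (c:=5%N) (r:=4%N) isT isT isT isT; rewrite /rho8F /= in E0.
  clear -E0 F_2_5_0 F_2_5_3 F_2_4_5.
  rewrite /cI /= in F_2_5_0 F_2_5_3 F_2_4_5 *. lra. }
have F_3_6_7 : ent (phi (eN R 3%N) (eN R 6%N)) 7%N = ent (phi (eN R 4%N) (eN R 5%N)) 2%N / 4 * (cI 3 6 7)%:~R.
{
  have E0 : ent (phi (eN R 3%N) (eN R 6%N)) 0%N + ent (phi (eN R 3%N) (eN R 6%N)) 3%N = 0 by rewrite -trace_ent; apply: Hin.
  have E1 := sp_entry Hsp (a:=0%N) (b:=3%N) (c:=6%N) (r:=0%N) isT isT isT isT; rewrite /rho8F /= in E1.
  have E2 := sp_entry Hsp (a:=1%N) (b:=3%N) (c:=6%N) (r:=1%N) isT isT isT isT; rewrite /rho8F /= in E2.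
  have E3 := sp_entry Hsp (a:=2%N) (b:=3%N) (c:=6%N) (r:=2%N) isT isT isT isT; rewrite /rho8F /= in E3.
  clear -E0 E1 E2 E3 F_1_6_1 F_2_6_5.
  rewrite /cI /= in F_1_6_1 F_2_6_5 *. lra. }
have F_3_6_0 : ent (phi (eN R 3%N) (eN R 6%N)) 0%N = ent (phi (eN R 4%N) (eN R 5%N)) 2%N / 4 * (cI 3 6 0)%:~R.
{
  have E0 := sp_entry Hsp (a:=1%N) (b:=3%N) (c:=6%N) (r:=1%N) isT isT isT isT; rewrite /rho8F /= in E0.
  clear -E0 F_3_6_7 F_1_6_1.
  rewrite /cI /= in F_3_6_7 F_1_6_1 *. lra. }
have F_3_6_3 : ent (phi (eN R 3%N) (eN R 6%N)) 3%N = ent (phi (eN R 4%N) (eN R 5%N)) 2%N / 4 * (cI 3 6 3)%:~R.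
{
  have E0 := sp_entry Hsp (a:=3%N) (b:=5%N) (c:=6%N) (r:=5%N) isT isT isT isT; rewrite /rho8F /= in E0.
  clear -E0 F_5_6_2 F_3_6_0 F_3_6_7.
  rewrite /cI /= in F_5_6_2 F_3_6_0 F_3_6_7 *. lra. }
have F_3_6_4 : ent (phi (eN R 3%N) (eN R 6%N)) 4%N = ent (phi (eN R 4%N) (eN R 5%N)) 2%N / 4 * (cI 3 6 4)%:~R.
{
  have E0 := sp_entry Hsp (a:=0%N) (b:=3%N) (c:=6%N) (r:=0%N) isT isT isT isT; rewrite /rho8F /= in E0.
  clear -E0 F_3_6_0.
  rewrite /cI /= in F_3_6_0 *. lra. }
have F_2_6_7 : ent (phi (eN R 2%N) (eN R 6%N)) 7%N = ent (phi (eN R 4%N) (eN R 5%N)) 2%N / 4 * (cI 2 6 7)%:~R.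
{
  have E0 : ent (phi (eN R 2%N) (eN R 6%N)) 0%N + ent (phi (eN R 2%N) (eN R 6%N)) 3%N = 0 by rewrite -trace_ent; apply: Hin.
  have E1 := sp_entry Hsp (a:=0%N) (b:=2%N) (c:=6%N) (r:=0%N) isT isT isT isT; rewrite /rho8F /= in E1.
  have E2 := sp_entry Hsp (a:=1%N) (b:=2%N) (c:=6%N) (r:=1%N) isT isT isT isT; rewrite /rho8F /= in E2.
  have E3 := sp_entry Hsp (a:=2%N) (b:=3%N) (c:=6%N) (r:=3%N) isT isT isT isT; rewrite /rho8F /= in E3.
  clear -E0 E1 E2 E3 F_0_6_1 F_3_6_6.
  rewrite /cI /= in F_0_6_1 F_3_6_6 *. lra. }
have F_2_6_0 : ent (phi (eN R 2%N) (eN R 6%N)) 0%N = ent (phi (eN R 4%N) (eN R 5%N)) 2%N / 4 * (cI 2 6 0)%:~R.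
{
  have E0 := sp_entry Hsp (a:=1%N) (b:=2%N) (c:=6%N) (r:=1%N) isT isT isT isT; rewrite /rho8F /= in E0.
  clear -E0 F_2_6_7.
  rewrite /cI /= in F_2_6_7 *. lra. }
have F_2_6_3 : ent (phi (eN R 2%N) (eN R 6%N)) 3%N = ent (phi (eN R 4%N) (eN R 5%N)) 2%N / 4 * (cI 2 6 3)%:~R.
{
  have E0 := sp_entry Hsp (a:=2%N) (b:=3%N) (c:=6%N) (r:=3%N) isT isT isT isT; rewrite /rho8F /= in E0.
  clear -E0 F_3_6_6 F_2_6_0 F_2_6_7.
  rewrite /cI /= in F_3_6_6 F_2_6_0 F_2_6_7 *. lra. }
have F_2_6_4 : ent (phi (eN R 2%N) (eN R 6%N)) 4%N = ent (phi (eN R 4%N) (eN R 5%N)) 2%N / 4 * (cI 2 6 4)%:~R.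
{
  have E0 := sp_entry Hsp (a:=2%N) (b:=4%N) (c:=6%N) (r:=4%N) isT isT isT isT; rewrite /rho8F /= in E0.
  clear -E0 F_4_6_2 F_2_6_0 F_2_6_3 F_2_4_1.
  rewrite /cI /= in F_4_6_2 F_2_6_0 F_2_6_3 F_2_4_1 *. lra. }
have F_3_7_7 : ent (phi (eN R 3%N) (eN R 7%N)) 7%N = ent (phi (eN R 4%N) (eN R 5%N)) 2%N / 4 * (cI 3 7 7)%:~R.
{
  have E0 : ent (phi (eN R 3%N) (eN R 7%N)) 0%N + ent (phi (eN R 3%N) (eN R 7%N)) 3%N = 0 by rewrite -trace_ent; apply: Hin.
  have E1 := sp_entry Hsp (a:=0%N) (b:=3%N) (c:=7%N) (r:=0%N) isT isT isT isT; rewrite /rho8F /= in E1.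
  have E2 := sp_entry Hsp (a:=1%N) (b:=3%N) (c:=7%N) (r:=1%N) isT isT isT isT; rewrite /rho8F /= in E2.
  have E3 := sp_entry Hsp (a:=2%N) (b:=3%N) (c:=7%N) (r:=2%N) isT isT isT isT; rewrite /rho8F /= in E3.
  clear -E0 E1 E2 E3 F_1_7_1 F_2_7_5.
  rewrite /cI /= in F_1_7_1 F_2_7_5 *. lra. }
have F_3_7_0 : ent (phi (eN R 3%N) (eN R 7%N)) 0%N = ent (phi (eN R 4%N) (eN R 5%N)) 2%N / 4 * (cI 3 7 0)%:~R.
{
  have E0 := sp_entry Hsp (a:=1%N) (b:=3%N) (c:=7%N) (r:=1%N) isT isT isT isT; rewrite /rho8F /= in E0.
  clear -E0 F_3_7_7 F_1_7_1.
  rewrite /cI /= in F_3_7_7 F_1_7_1 *. lra. }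
have F_3_7_3 : ent (phi (eN R 3%N) (eN R 7%N)) 3%N = ent (phi (eN R 4%N) (eN R 5%N)) 2%N / 4 * (cI 3 7 3)%:~R.
{
  have E0 := sp_entry Hsp (a:=3%N) (b:=5%N) (c:=7%N) (r:=5%N) isT isT isT isT; rewrite /rho8F /= in E0.
  clear -E0 F_5_7_2 F_3_7_0 F_3_7_7 F_3_5_1.
  rewrite /cI /= in F_5_7_2 F_3_7_0 F_3_7_7 F_3_5_1 *. lra. }
have F_3_7_4 : ent (phi (eN R 3%N) (eN R 7%N)) 4%N = ent (phi (eN R 4%N) (eN R 5%N)) 2%N / 4 * (cI 3 7 4)%:~R.
{
  have E0 := sp_entry Hsp (a:=3%N) (b:=6%N) (c:=7%N) (r:=6%N) isT isT isT isT; rewrite /rho8F /= in E0.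
  clear -E0 F_3_7_3 F_3_6_5.
  rewrite /cI /= in F_3_7_3 F_3_6_5 *. lra. }
have F_2_7_7 : ent (phi (eN R 2%N) (eN R 7%N)) 7%N = ent (phi (eN R 4%N) (eN R 5%N)) 2%N / 4 * (cI 2 7 7)%:~R.
{
  have E0 : ent (phi (eN R 2%N) (eN R 7%N)) 0%N + ent (phi (eN R 2%N) (eN R 7%N)) 3%N = 0 by rewrite -trace_ent; apply: Hin.
  have E1 := sp_entry Hsp (a:=0%N) (b:=2%N) (c:=7%N) (r:=0%N) isT isT isT isT; rewrite /rho8F /= in E1.
  have E2 := sp_entry Hsp (a:=1%N) (b:=2%N) (c:=7%N) (r:=1%N) isT isT isT isT; rewrite /rho8F /= in E2.
  have E3 := sp_entry Hsp (a:=2%N) (b:=3%N) (c:=7%N) (r:=3%N) isT isT isT isT; rewrite /rho8F /= in E3.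
  clear -E0 E1 E2 E3 F_0_7_1 F_3_7_6.
  rewrite /cI /= in F_0_7_1 F_3_7_6 *. lra. }
have F_2_7_0 : ent (phi (eN R 2%N) (eN R 7%N)) 0%N = ent (phi (eN R 4%N) (eN R 5%N)) 2%N / 4 * (cI 2 7 0)%:~R.
{
  have E0 := sp_entry Hsp (a:=1%N) (b:=2%N) (c:=7%N) (r:=1%N) isT isT isT isT; rewrite /rho8F /= in E0.
  clear -E0 F_2_7_7.
  rewrite /cI /= in F_2_7_7 *. lra. }
have F_2_7_3 : ent (phi (eN R 2%N) (eN R 7%N)) 3%N = ent (phi (eN R 4%N) (eN R 5%N)) 2%N / 4 * (cI 2 7 3)%:~R.
{
  have E0 := sp_entry Hsp (a:=2%N) (b:=3%N) (c:=7%N) (r:=3%N) isT isT isT isT; rewrite /rho8F /= in E0.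
  clear -E0 F_3_7_6 F_2_7_0 F_2_7_7.
  rewrite /cI /= in F_3_7_6 F_2_7_0 F_2_7_7 *. lra. }
have F_2_7_4 : ent (phi (eN R 2%N) (eN R 7%N)) 4%N = ent (phi (eN R 4%N) (eN R 5%N)) 2%N / 4 * (cI 2 7 4)%:~R.
{
  have E0 := sp_entry Hsp (a:=2%N) (b:=4%N) (c:=7%N) (r:=4%N) isT isT isT isT; rewrite /rho8F /= in E0.
  clear -E0 F_4_7_2 F_2_7_0 F_2_7_3.
  rewrite /cI /= in F_4_7_2 F_2_7_0 F_2_7_3 *. lra. }
have F_4_5_7 : ent (phi (eN R 4%N) (eN R 5%N)) 7%N = ent (phi (eN R 4%N) (eN R 5%N)) 2%N / 4 * (cI 4 5 7)%:~R.
{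
  have E0 : ent (phi (eN R 4%N) (eN R 5%N)) 0%N + ent (phi (eN R 4%N) (eN R 5%N)) 3%N = 0 by rewrite -trace_ent; apply: Hin.
  have E1 := sp_entry Hsp (a:=0%N) (b:=4%N) (c:=5%N) (r:=0%N) isT isT isT isT; rewrite /rho8F /= in E1.
  have E2 := sp_entry Hsp (a:=1%N) (b:=4%N) (c:=5%N) (r:=1%N) isT isT isT isT; rewrite /rho8F /= in E2.
  have E3 := sp_entry Hsp (a:=2%N) (b:=4%N) (c:=5%N) (r:=2%N) isT isT isT isT; rewrite /rho8F /= in E3.
  clear -E0 E1 E2 E3 F_2_5_1.
  rewrite /cI /= in F_2_5_1 *. lra. }
have F_4_5_0 : ent (phi (eN R 4%N) (eN R 5%N)) 0%N = ent (phi (eN R 4%N) (eN R 5%N)) 2%N / 4 * (cI 4 5 0)%:~R.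
{
  have E0 := sp_entry Hsp (a:=1%N) (b:=4%N) (c:=5%N) (r:=1%N) isT isT isT isT; rewrite /rho8F /= in E0.
  clear -E0 F_4_5_7.
  rewrite /cI /= in F_4_5_7 *. lra. }
have F_4_5_3 : ent (phi (eN R 4%N) (eN R 5%N)) 3%N = ent (phi (eN R 4%N) (eN R 5%N)) 2%N / 4 * (cI 4 5 3)%:~R.
{
  have E0 := sp_entry Hsp (a:=3%N) (b:=4%N) (c:=5%N) (r:=3%N) isT isT isT isT; rewrite /rho8F /= in E0.
  clear -E0 F_4_5_0 F_4_5_7 F_3_4_1.
  rewrite /cI /= in F_4_5_0 F_4_5_7 F_3_4_1 *. lra. }
have F_4_5_4 : ent (phi (eN R 4%N) (eN R 5%N)) 4%N = ent (phi (eN R 4%N) (eN R 5%N)) 2%N / 4 * (cI 4 5 4)%:~R.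
{
  have E0 := sp_entry Hsp (a:=4%N) (b:=5%N) (c:=6%N) (r:=6%N) isT isT isT isT; rewrite /rho8F /= in E0.
  clear -E0 F_5_6_2 F_4_5_3.
  rewrite /cI /= in F_5_6_2 F_4_5_3 *. lra. }
have F_4_6_7 : ent (phi (eN R 4%N) (eN R 6%N)) 7%N = ent (phi (eN R 4%N) (eN R 5%N)) 2%N / 4 * (cI 4 6 7)%:~R.
{
  have E0 : ent (phi (eN R 4%N) (eN R 6%N)) 0%N + ent (phi (eN R 4%N) (eN R 6%N)) 3%N = 0 by rewrite -trace_ent; apply: Hin.
  have E1 := sp_entry Hsp (a:=0%N) (b:=4%N) (c:=6%N) (r:=0%N) isT isT isT isT; rewrite /rho8F /= in E1.
  have E2 := sp_entry Hsp (a:=1%N) (b:=4%N) (c:=6%N) (r:=1%N) isT isT isT isT; rewrite /rho8F /= in E2.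
  have E3 := sp_entry Hsp (a:=2%N) (b:=4%N) (c:=6%N) (r:=2%N) isT isT isT isT; rewrite /rho8F /= in E3.
  clear -E0 E1 E2 E3 F_2_6_1.
  rewrite /cI /= in F_2_6_1 *. lra. }
have F_4_6_0 : ent (phi (eN R 4%N) (eN R 6%N)) 0%N = ent (phi (eN R 4%N) (eN R 5%N)) 2%N / 4 * (cI 4 6 0)%:~R.
{
  have E0 := sp_entry Hsp (a:=1%N) (b:=4%N) (c:=6%N) (r:=1%N) isT isT isT isT; rewrite /rho8F /= in E0.
  clear -E0 F_4_6_7.
  rewrite /cI /= in F_4_6_7 *. lra. }
have F_4_6_3 : ent (phi (eN R 4%N) (eN R 6%N)) 3%N = ent (phi (eN R 4%N) (eN R 5%N)) 2%N / 4 * (cI 4 6 3)%:~R.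
{
  have E0 := sp_entry Hsp (a:=3%N) (b:=4%N) (c:=6%N) (r:=3%N) isT isT isT isT; rewrite /rho8F /= in E0.
  clear -E0 F_4_6_0 F_4_6_7.
  rewrite /cI /= in F_4_6_0 F_4_6_7 *. lra. }
have F_4_6_4 : ent (phi (eN R 4%N) (eN R 6%N)) 4%N = ent (phi (eN R 4%N) (eN R 5%N)) 2%N / 4 * (cI 4 6 4)%:~R.
{
  have E0 := sp_entry Hsp (a:=0%N) (b:=4%N) (c:=6%N) (r:=0%N) isT isT isT isT; rewrite /rho8F /= in E0.
  clear -E0 F_4_6_0.
  rewrite /cI /= in F_4_6_0 *. lra. }
have F_4_7_7 : ent (phi (eN R 4%N) (eN R 7%N)) 7%N = ent (phi (eN R 4%N) (eN R 5%N)) 2%N / 4 * (cI 4 7 7)%:~R.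
{
  have E0 : ent (phi (eN R 4%N) (eN R 7%N)) 0%N + ent (phi (eN R 4%N) (eN R 7%N)) 3%N = 0 by rewrite -trace_ent; apply: Hin.
  have E1 := sp_entry Hsp (a:=0%N) (b:=4%N) (c:=7%N) (r:=0%N) isT isT isT isT; rewrite /rho8F /= in E1.
  have E2 := sp_entry Hsp (a:=1%N) (b:=4%N) (c:=7%N) (r:=1%N) isT isT isT isT; rewrite /rho8F /= in E2.
  have E3 := sp_entry Hsp (a:=2%N) (b:=4%N) (c:=7%N) (r:=2%N) isT isT isT isT; rewrite /rho8F /= in E3.
  clear -E0 E1 E2 E3 F_2_7_1.
  rewrite /cI /= in F_2_7_1 *. lra. }
have F_4_7_0 : ent (phi (eN R 4%N) (eN R 7%N)) 0%N = ent (phi (eN R 4%N) (eN R 5%N)) 2%N / 4 * (cI 4 7 0)%:~R.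
{
  have E0 := sp_entry Hsp (a:=1%N) (b:=4%N) (c:=7%N) (r:=1%N) isT isT isT isT; rewrite /rho8F /= in E0.
  clear -E0 F_4_7_7.
  rewrite /cI /= in F_4_7_7 *. lra. }
have F_4_7_3 : ent (phi (eN R 4%N) (eN R 7%N)) 3%N = ent (phi (eN R 4%N) (eN R 5%N)) 2%N / 4 * (cI 4 7 3)%:~R.
{
  have E0 := sp_entry Hsp (a:=3%N) (b:=4%N) (c:=7%N) (r:=3%N) isT isT isT isT; rewrite /rho8F /= in E0.
  clear -E0 F_4_7_0 F_4_7_7.
  rewrite /cI /= in F_4_7_0 F_4_7_7 *. lra. }
have F_4_7_4 : ent (phi (eN R 4%N) (eN R 7%N)) 4%N = ent (phi (eN R 4%N) (eN R 5%N)) 2%N / 4 * (cI 4 7 4)%:~R.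
{
  have E0 := sp_entry Hsp (a:=4%N) (b:=6%N) (c:=7%N) (r:=6%N) isT isT isT isT; rewrite /rho8F /= in E0.
  clear -E0 F_6_7_2 F_4_7_3 F_4_6_5.
  rewrite /cI /= in F_6_7_2 F_4_7_3 F_4_6_5 *. lra. }
have F_5_6_7 : ent (phi (eN R 5%N) (eN R 6%N)) 7%N = ent (phi (eN R 4%N) (eN R 5%N)) 2%N / 4 * (cI 5 6 7)%:~R.
{
  have E0 : ent (phi (eN R 5%N) (eN R 6%N)) 0%N + ent (phi (eN R 5%N) (eN R 6%N)) 3%N = 0 by rewrite -trace_ent; apply: Hin.
  have E1 := sp_entry Hsp (a:=0%N) (b:=5%N) (c:=6%N) (r:=0%N) isT isT isT isT; rewrite /rho8F /= in E1.
  have E2 := sp_entry Hsp (a:=1%N) (b:=5%N) (c:=6%N) (r:=1%N) isT isT isT isT; rewrite /rho8F /= in E2.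
  have E3 := sp_entry Hsp (a:=2%N) (b:=5%N) (c:=6%N) (r:=2%N) isT isT isT isT; rewrite /rho8F /= in E3.
  clear -E0 E1 E2 E3.
  rewrite /cI /= . lra. }
have F_5_6_0 : ent (phi (eN R 5%N) (eN R 6%N)) 0%N = ent (phi (eN R 4%N) (eN R 5%N)) 2%N / 4 * (cI 5 6 0)%:~R.
{
  have E0 := sp_entry Hsp (a:=1%N) (b:=5%N) (c:=6%N) (r:=1%N) isT isT isT isT; rewrite /rho8F /= in E0.
  clear -E0 F_5_6_7.
  rewrite /cI /= in F_5_6_7 *. lra. }
have F_5_6_3 : ent (phi (eN R 5%N) (eN R 6%N)) 3%N = ent (phi (eN R 4%N) (eN R 5%N)) 2%N / 4 * (cI 5 6 3)%:~R.
{
  have E0 := sp_entry Hsp (a:=3%N) (b:=5%N) (c:=6%N) (r:=3%N) isT isT isT isT; rewrite /rho8F /= in E0.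
  clear -E0 F_5_6_0 F_5_6_7 F_3_6_1.
  rewrite /cI /= in F_5_6_0 F_5_6_7 F_3_6_1 *. lra. }
have F_5_6_4 : ent (phi (eN R 5%N) (eN R 6%N)) 4%N = ent (phi (eN R 4%N) (eN R 5%N)) 2%N / 4 * (cI 5 6 4)%:~R.
{
  have E0 := sp_entry Hsp (a:=4%N) (b:=5%N) (c:=6%N) (r:=4%N) isT isT isT isT; rewrite /rho8F /= in E0.
  clear -E0 F_5_6_0 F_5_6_3 F_4_6_5 F_4_5_1.
  rewrite /cI /= in F_5_6_0 F_5_6_3 F_4_6_5 F_4_5_1 *. lra. }
have F_5_7_7 : ent (phi (eN R 5%N) (eN R 7%N)) 7%N = ent (phi (eN R 4%N) (eN R 5%N)) 2%N / 4 * (cI 5 7 7)%:~R.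
{
  have E0 : ent (phi (eN R 5%N) (eN R 7%N)) 0%N + ent (phi (eN R 5%N) (eN R 7%N)) 3%N = 0 by rewrite -trace_ent; apply: Hin.
  have E1 := sp_entry Hsp (a:=0%N) (b:=5%N) (c:=7%N) (r:=0%N) isT isT isT isT; rewrite /rho8F /= in E1.
  have E2 := sp_entry Hsp (a:=1%N) (b:=5%N) (c:=7%N) (r:=1%N) isT isT isT isT; rewrite /rho8F /= in E2.
  have E3 := sp_entry Hsp (a:=2%N) (b:=5%N) (c:=7%N) (r:=2%N) isT isT isT isT; rewrite /rho8F /= in E3.
  clear -E0 E1 E2 E3.
  rewrite /cI /= . lra. }
have F_5_7_0 : ent (phi (eN R 5%N) (eN R 7%N)) 0%N = ent (phi (eN R 4%N) (eN R 5%N)) 2%N / 4 * (cI 5 7 0)%:~R.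
{
  have E0 := sp_entry Hsp (a:=1%N) (b:=5%N) (c:=7%N) (r:=1%N) isT isT isT isT; rewrite /rho8F /= in E0.
  clear -E0 F_5_7_7.
  rewrite /cI /= in F_5_7_7 *. lra. }
have F_5_7_3 : ent (phi (eN R 5%N) (eN R 7%N)) 3%N = ent (phi (eN R 4%N) (eN R 5%N)) 2%N / 4 * (cI 5 7 3)%:~R.
{
  have E0 := sp_entry Hsp (a:=3%N) (b:=5%N) (c:=7%N) (r:=3%N) isT isT isT isT; rewrite /rho8F /= in E0.
  clear -E0 F_5_7_0 F_5_7_7 F_3_7_1.
  rewrite /cI /= in F_5_7_0 F_5_7_7 F_3_7_1 *. lra. }
have F_5_7_4 : ent (phi (eN R 5%N) (eN R 7%N)) 4%N = ent (phi (eN R 4%N) (eN R 5%N)) 2%N / 4 * (cI 5 7 4)%:~R.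
{
  have E0 := sp_entry Hsp (a:=4%N) (b:=5%N) (c:=7%N) (r:=4%N) isT isT isT isT; rewrite /rho8F /= in E0.
  clear -E0 F_5_7_0 F_5_7_3 F_4_7_5.
  rewrite /cI /= in F_5_7_0 F_5_7_3 F_4_7_5 *. lra. }
have F_6_7_7 : ent (phi (eN R 6%N) (eN R 7%N)) 7%N = ent (phi (eN R 4%N) (eN R 5%N)) 2%N / 4 * (cI 6 7 7)%:~R.
{
  have E0 : ent (phi (eN R 6%N) (eN R 7%N)) 0%N + ent (phi (eN R 6%N) (eN R 7%N)) 3%N = 0 by rewrite -trace_ent; apply: Hin.
  have E1 := sp_entry Hsp (a:=0%N) (b:=6%N) (c:=7%N) (r:=0%N) isT isT isT isT; rewrite /rho8F /= in E1.
  have E2 := sp_entry Hsp (a:=1%N) (b:=6%N) (c:=7%N) (r:=1%N) isT isT isT isT; rewrite /rho8F /= in E2.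
  have E3 := sp_entry Hsp (a:=2%N) (b:=6%N) (c:=7%N) (r:=2%N) isT isT isT isT; rewrite /rho8F /= in E3.
  clear -E0 E1 E2 E3.
  rewrite /cI /= . lra. }
have F_6_7_0 : ent (phi (eN R 6%N) (eN R 7%N)) 0%N = ent (phi (eN R 4%N) (eN R 5%N)) 2%N / 4 * (cI 6 7 0)%:~R.
{
  have E0 := sp_entry Hsp (a:=1%N) (b:=6%N) (c:=7%N) (r:=1%N) isT isT isT isT; rewrite /rho8F /= in E0.
  clear -E0 F_6_7_7.
  rewrite /cI /= in F_6_7_7 *. lra. }
have F_6_7_3 : ent (phi (eN R 6%N) (eN R 7%N)) 3%N = ent (phi (eN R 4%N) (eN R 5%N)) 2%N / 4 * (cI 6 7 3)%:~R.
{
  have E0 := sp_entry Hsp (a:=3%N) (b:=6%N) (c:=7%N) (r:=3%N) isT isT isT isT; rewrite /rho8F /= in E0.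
  clear -E0 F_6_7_0 F_6_7_7.
  rewrite /cI /= in F_6_7_0 F_6_7_7 *. lra. }
have F_6_7_4 : ent (phi (eN R 6%N) (eN R 7%N)) 4%N = ent (phi (eN R 4%N) (eN R 5%N)) 2%N / 4 * (cI 6 7 4)%:~R.
{
  have E0 := sp_entry Hsp (a:=4%N) (b:=6%N) (c:=7%N) (r:=4%N) isT isT isT isT; rewrite /rho8F /= in E0.
  clear -E0 F_6_7_0 F_6_7_3 F_4_7_1.
  rewrite /cI /= in F_6_7_0 F_6_7_3 F_4_7_1 *. lra. }
exact: (@dispatch (fun i j t => ent (phi (eN R i) (eN R j)) t = ent (phi (eN R 4%N) (eN R 5%N)) 2%N / 4 * (cI i j t)%:~R) F_0_1_0 F_0_1_1 F_0_1_2 F_0_1_3 F_0_1_4 F_0_1_5 F_0_1_6 F_0_1_7 F_0_2_0 F_0_2_1 F_0_2_2 F_0_2_3 F_0_2_4 F_0_2_5 F_0_2_6 F_0_2_7 F_0_3_0 F_0_3_1 F_0_3_2 F_0_3_3 F_0_3_4 F_0_3_5 F_0_3_6 F_0_3_7 F_0_4_0 F_0_4_1 F_0_4_2 F_0_4_3 F_0_4_4 F_0_4_5 F_0_4_6 F_0_4_7 F_0_5_0 F_0_5_1 F_0_5_2 F_0_5_3 F_0_5_4 F_0_5_5 F_0_5_6 F_0_5_7 F_0_6_0 F_0_6_1 F_0_6_2 F_0_6_3 F_0_6_4 F_0_6_5 F_0_6_6 F_0_6_7 F_0_7_0 F_0_7_1 F_0_7_2 F_0_7_3 F_0_7_4 F_0_7_5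 F_0_7_6 F_0_7_7 F_1_2_0 F_1_2_1 F_1_2_2 F_1_2_3 F_1_2_4 F_1_2_5 F_1_2_6 F_1_2_7 F_1_3_0 F_1_3_1 F_1_3_2 F_1_3_3 F_1_3_4 F_1_3_5 F_1_3_6 F_1_3_7 F_1_4_0 F_1_4_1 F_1_4_2 F_1_4_3 F_1_4_4 F_1_4_5 F_1_4_6 F_1_4_7 F_1_5_0 F_1_5_1 F_1_5_2 F_1_5_3 F_1_5_4 F_1_5_5 F_1_5_6 F_1_5_7 F_1_6_0 F_1_6_1 F_1_6_2 F_1_6_3 F_1_6_4 F_1_6_5 F_1_6_6 F_1_6_7 F_1_7_0 F_1_7_1 F_1_7_2 F_1_7_3 F_1_7_4 F_1_7_5 F_1_7_6 F_1_7_7 F_2_3_0 F_2_3_1 F_2_3_2 F_2_3_3 F_2_3_4 F_2_3_5 F_2_3_6 F_2_3_7 F_2_4_0 F_2_4_1 F_2_4_2 F_2_4_3 F_2_4_4 F_2_4_5 F_2_4_6 F_2_4_7 F_2_5_0 F_2_5_1 F_2_5_2 F_2_5_3 F_2_5_4 F_2_5_5 F_2_5_6 F_2_5_7 F_2_6_0 F_2_6_1 F_2_6_2 F_2_6_3 F_2_6_4 F_2_6_5 F_2_6_6 F_2_6_7 F_2_7_0 F_2_7_1 F_2_7_2 F_2_7_3 F_2_7_4 F_2_7_5 F_2_7_6 F_2_7_7 F_3_4_0 F_3_4_1 F_3_4_2 F_3_4_3 F_3_4_4 F_3_4_5 F_3_4_6 F_3_4_7 F_3_5_0 F_3_5_1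 F_3_5_2 F_3_5_3 F_3_5_4 F_3_5_5 F_3_5_6 F_3_5_7 F_3_6_0 F_3_6_1 F_3_6_2 F_3_6_3 F_3_6_4 F_3_6_5 F_3_6_6 F_3_6_7 F_3_7_0 F_3_7_1 F_3_7_2 F_3_7_3 F_3_7_4 F_3_7_5 F_3_7_6 F_3_7_7 F_4_5_0 F_4_5_1 F_4_5_2 F_4_5_3 F_4_5_4 F_4_5_5 F_4_5_6 F_4_5_7 F_4_6_0 F_4_6_1 F_4_6_2 F_4_6_3 F_4_6_4 F_4_6_5 F_4_6_6 F_4_6_7 F_4_7_0 F_4_7_1 F_4_7_2 F_4_7_3 F_4_7_4 F_4_7_5 F_4_7_6 F_4_7_7 F_5_6_0 F_5_6_1 F_5_6_2 F_5_6_3 F_5_6_4 F_5_6_5 F_5_6_6 F_5_6_7 F_5_7_0 F_5_7_1 F_5_7_2 F_5_7_3 F_5_7_4 F_5_7_5 F_5_7_6 F_5_7_7 F_6_7_0 F_6_7_1 F_6_7_2 F_6_7_3 F_6_7_4 F_6_7_5 F_6_7_6 F_6_7_7).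
Qed.

Theorem lemma5 (R : realType) :
  one_dimensional (@in_ker_spencer2 R 3 2).
Proof.
exists (@phi0 R); split.
- exact: phi0_ker.
- exists (delta_mx (inord 4) 0), (delta_mx (inord 5) 0).
  rewrite phi0_basis => h.
  have := congr1 (fun x => ent x 2) h.
  rewrite ent_C // ent0 !inordK //= /cI /= => H; clear h; lra.
- move=> phi [Hh Hsp].
  have Fall := facts Hh Hsp.
  exists (ent (phi (eN R 4) (eN R 5)) 2 / 4) => u v.
  rewrite (hom_expand Hh u v) /phi0 scaler_sumr; apply: eq_bigr => i _.
  rewrite scaler_sumr; apply: eq_bigr => j _.
  rewrite scalerA [_ / 4 * _]mulrC -[RHS]scalerA; congr (_ *: _).
  apply: ent_inj => t ht; rewrite entZ ent_C //.
  have ei : forall k : 'I_(Vdim 3 2), delta_mx k 0 = eN R k by move=> k; rewrite /eN inord_val.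
  rewrite !ei; case: (ltngtP i j) => hij.
  + by apply: Fall => //; apply: ltn_ord.
  + rewrite (hom_anti Hh) entN (Fall j i t) // ?ltn_ord // cI_anti intrN; ring.
  + have -> : i = j by apply: val_inj.
    by case: Hh => _ _ _ Ha; rewrite Ha ent0 cI_diag mulr0.
Qed.
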